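(* Consider LPC-SVRG (defined in the context) and fix an epoch $s$ and inner index $t$. Let $d_\lambda\ge 0$ be a number such that almost surely, for every worker $i$, the number of coordinates of $u_t^i$ lying outside $[-2^{b-1}\delta,(2^{b-1}-1)\delta]$, where $\delta$ is the scale factor used to quantize $u_t^i$ (i.e. $\delta_t^i$ in scheme (a), $\delta_t$ in schemes (b),(c)), is at most $d_\lambda$. Then: (i) under communication scheme (a) or (b), $$\mathbf{E}\|v_t^{s+1}-\nabla f(x_t^{s+1})\|^2\le 2L^2\Big[\frac{d\lambda^2}{4(2^{b-1}-1)^2}+d_\lambda(1-\lambda)^2+\frac{1}{NB}\Big]\mathbf{E}\|x_t^{s+1}-\tilde x^s\|^2;$$ (ii) under communication scheme (c), $$\mathbf{E}\|v_t^{s+1}-\nabla f(x_t^{s+1})\|^2\le 2L^2\Big[\frac{3d\lambda^2}{8(2^{b-1}-1)^2}+d_\lambda(1-\lambda)^2+\frac{1}{NB}\Big]\mathbf{E}\|x_t^{s+1}-\tilde x^s\|^2.$$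
   Context: Problem setting: $f_1,\dots,f_n:\mathbb{R}^d\to\mathbb{R}$ are differentiable with $\|\nabla f_i(x)-\nabla f_i(y)\|\le L\|x-y\|$; $f=\frac1n\sum_i f_i$; $h:\mathbb{R}^d\to\mathbb{R}\cup\{+\infty\}$ is proper, convex and lower semicontinuous; $P=f+h$; $\mathrm{prox}_{\eta h}(x)=\arg\min_y\{h(y)+\frac{1}{2\eta}\|y-x\|^2\}$. Quantization: for an integer $b\ge2$ and $\delta>0$, $\mathrm{dom}(\delta,b)=\{k\delta:k\in\mathbb{Z},-2^{b-1}\le k\le 2^{b-1}-1\}$; the scalar quantizer $Q_{(\delta,b)}(x)$, for $x\in[-2^{b-1}\delta,(2^{b-1}-1)\delta]$ with $z$ the largest grid point $\le x$, equals $z$ with probability $\frac{z+\delta-x}{\delta}$ and $z+\delta$ otherwise; for $x$ outside this interval it equals the nearest grid point. On vectors it acts coordinatewise with independent randomness. If $\delta=0$ (which only occurs when the vector to be quantized is $0$) we set the output to $0$. LPC-SVRG with $N$ workers, parameters $S,m,B\in\mathbb{N}$, $\eta>0$, $\lambda\in(0,1]$, $b\ge 2$, starting point $\tilde x^0=x^0$: for $s=0,\dots,S-1$, set $x_0^{s+1}=\tilde x^s$ and compute $\nabla f(\tilde x^s)$ exactly; for $t=0,\dots,m-1$: each worker $i\in\{1,\dots,N\}$ draws $B$ indices independently and uniformly from $\{1,\dots,n\}$ (with replacement; independent across workers and iterations), forming the multiset $I_t^i$, and computes $u_t^i=\frac1B\sum_{a\in I_t^i}[\nabla f_a(x_t^{s+1})-\nabla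 f_a(\tilde x^s)]$; let $\delta_t^i=\frac{\lambda\|u_t^i\|_\infty}{2^{b-1}-1}$. Then $\tilde u_t$ is formed by one of three schemes: (a) $\tilde u_t=\frac1N\sum_i Q_{(\delta_t^i,b)}(u_t^i)$; (b) with $\delta_t=\max_i\delta_t^i$, $\tilde u_t=\frac1N\sum_i Q_{(\delta_t,b)}(u_t^i)$; (c) with $\delta_t=\max_i\delta_t^i$ and $\tilde u_t^i=Q_{(\delta_t,b)}(u_t^i)$, $\tilde u_t=Q_{(\delta_t,b)}\big(\frac1N\sum_i\tilde u_t^i\big)$ (with fresh independent rounding). All quantization roundings are independent of each other given the sampled indices. Then $v_t^{s+1}=\tilde u_t+\nabla f(\tilde x^s)$ and $x_{t+1}^{s+1}=\mathrm{prox}_{\eta h}(x_t^{s+1}-\eta v_t^{s+1})$. After the inner loop, $\tilde x^{s+1}=x_m^{s+1}$. The output $x_{out}$ is chosen uniformly at random from $\{x_t^{s+1}: 0\le t\le m-1,\ 0\le s\le S-1\}$. *)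

(* Defs.v *)
(* Vectors of R^d are modelled as [nat -> R],
   only the coordinates 0..d-1 are ever inspected (norms, inner products,
   quantization). Randomness is modelled by finite discrete distributions
   (lists of (probability, outcome) pairs); all randomness in LPC-SVRG is finite. *)
From Stdlib Require Import Reals Lra List.
Import ListNotations.
Open Scope R_scope.

Definition vec := nat -> R.
Definition vzero : vec := fun _ => 0.
Definition vadd (x y : vec) : vec := fun j => x j + y j.
Definition vsub (x y : vec) : vec := fun j => x j - y j.
Definition vscal (a : R) (x : vec) : vec := fun j => a * x j.

Fixpoint sumR (m : nat) (F : nat -> R) : R :=
  match m with O => 0 | S k => sumR k F + F k end.

Definition inner (d : nat) (x y : vec) : R := sumR d (fun j => x j * y j).
Definition sqnorm (d : nat) (x : vec) : R := sumR d (fun j => x j ^ 2).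
Definition norm (d : nat) (x : vec) : R := sqrt (sqnorm d x).
Fixpoint infnorm (d : nat) (x : vec) : R :=
  match d with O => 0 | S k => Rmax (infnorm k x) (Rabs (x k)) end.

Definition dist (A : Type) := list (R * A).
Definition dret {A} (a : A) : dist A := [(1, a)].
Fixpoint dbind {A B} (m : dist A) (k : A -> dist B) : dist B :=
  match m with
  | [] => []
  | (p, a) :: m' => map (fun qb => (p * fst qb, snd qb)) (k a) ++ dbind m' k
  end.
Fixpoint expect {A} (m : dist A) (F : A -> R) : R :=
  match m with [] => 0 | (p, a) :: m' => p * F a + expect m' F end.
Definition almost_surely {A} (m : dist A) (P : A -> Prop) : Prop :=
  forall p a, In (p, a) m -> 0 < p -> P a.

(* uniform index in {0,...,n-1} (the paper's {1,...,n}, shifted) *)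
Definition unif (n : nat) : dist nat := map (fun i => (/ INR n, i)) (seq 0 n).
Fixpoint sampleB (B n : nat) : dist (list nat) :=
  match B with
  | O => dret []
  | S B' => dbind (unif n) (fun a => dbind (sampleB B' n) (fun I => dret (a :: I)))
  end.
Fixpoint sample_workers (N B n : nat) : dist (list (list nat)) :=
  match N with
  | O => dret []
  | S N' => dbind (sampleB B n) (fun I =>
              dbind (sample_workers N' B n) (fun Is => dret (I :: Is)))
  end.

Definition qlo (delta : R) (b : nat) : R := - (2 ^ (b - 1)%nat) * delta.
Definition qhi (delta : R) (b : nat) : R := (2 ^ (b - 1)%nat - 1) * delta.

Definition Qsc (delta : R) (b : nat) (x : R) : dist R :=
  if Req_EM_T delta 0 then dret 0 else
  if Rlt_dec x (qlo delta b) then dret (qlo delta b) else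
  if Rlt_dec (qhi delta b) x then dret (qhi delta b) else
  let z := delta * IZR (Int_part (x / delta)) in   (* largest grid point <= x *)
  [((z + delta - x) / delta, z); ((x - z) / delta, z + delta)].

Fixpoint Qvec_aux (delta : R) (b : nat) (x : vec) (k : nat) : dist vec :=
  match k with
  | O => dret vzero
  | S k' => dbind (Qvec_aux delta b x k') (fun y =>
              dbind (Qsc delta b (x k')) (fun z =>
                dret (fun j => if Nat.eqb j k' then z else y j)))
  end.
Definition Qvec (delta : R) (b d : nat) (x : vec) : dist vec := Qvec_aux delta b x d.

Fixpoint Qlist (b d : nat) (ds : list R) (us : list vec) : dist (list vec) :=
  match ds, us with
  | delta :: ds', u :: us' =>
      dbind (Qvec delta b d u) (fun q => dbind (Qlist b d ds' us') (fun qs => dret (q :: qs)))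
  | _, _ => dret []
  end.

Fixpoint count_out (delta : R) (b : nat) (u : vec) (k : nat) : nat :=
  match k with
  | O => O
  | S k' => (count_out delta b u k' +
             (if Rlt_dec (u k') (qlo delta b) then 1
              else if Rlt_dec (qhi delta b) (u k') then 1 else 0))%nat
  end.

Inductive scheme := SchA | SchB | SchC.

Record StepOut := mkStepOut {
  so_us : list vec;   (* u_t^i, i = 1..N *)
  so_ds : list R;     (* scale factor used to quantize u_t^i *)
  so_v  : vec         (* v_t^{s+1} *)
}.

Definition gradf (n : nat) (g : nat -> vec -> vec) (x : vec) : vec :=
  fun j => / INR n * sumR n (fun a => g a x j).

Definition avg (N : nat) (l : list vec) : vec :=
  fun j => / INR N * fold_right (fun v acc => v j + acc) 0 l.

Definition uvec (B : nat) (g : nat -> vec -> vec) (x xt : vec) (I : list nat) : vec :=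
  fun j => / INR B * fold_right (fun a acc => g a x j - g a xt j + acc) 0 I.

Definition scale (b : nat) (lam : R) (d : nat) (u : vec) : R :=
  lam * infnorm d u / (2 ^ (b - 1)%nat - 1).

(* one inner iteration at current point x with snapshot xt *)
Definition step (sc : scheme) (n N B b d : nat) (lam : R)
    (g : nat -> vec -> vec) (x xt : vec) : dist StepOut :=
  dbind (sample_workers N B n) (fun Is =>
    let us := map (uvec B g x xt) Is in
    let dis := map (scale b lam d) us in
    let dt := fold_right Rmax 0 dis in
    match sc with
    | SchA => dbind (Qlist b d dis us) (fun qs =>
                dret (mkStepOut us dis (vadd (avg N qs) (gradf n g xt))))
    | SchB => let ds := map (fun _ => dt) us in
              dbind (Qlist b d ds us) (fun qs =>
                dret (mkStepOut us ds (vadd (avg N qs) (gradf n g xt))))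
    | SchC => let ds := map (fun _ => dt) us in
              dbind (Qlist b d ds us) (fun qs =>
                dbind (Qvec dt b d (avg N qs)) (fun w =>
                  dret (mkStepOut us ds (vadd w (gradf n g xt)))))
    end).

(* distribution of x_k^{s+1} given x_0^{s+1} = x and snapshot xt *)
Fixpoint inner_loop (sc : scheme) (n N B b d : nat) (lam eta : R)
    (g : nat -> vec -> vec) (prox : vec -> vec) (k : nat) (x xt : vec) : dist vec :=
  match k with
  | O => dret x
  | S k' => dbind (inner_loop sc n N B b d lam eta g prox k' x xt) (fun y =>
              dbind (step sc n N B b d lam g y xt) (fun o =>
                dret (prox (fun j => y j - eta * so_v o j))))
  end.

(* distribution of the snapshot \tilde x^s *)
Fixpoint snapshots (sc : scheme) (n N B b d m : nat) (lam eta : R)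
    (g : nat -> vec -> vec) (prox : vec -> vec) (s : nat) (x0 : vec) : dist vec :=
  match s with
  | O => dret x0
  | S s' => dbind (snapshots sc n N B b d m lam eta g prox s' x0) (fun xt =>
              inner_loop sc n N B b d lam eta g prox m xt xt)
  end.

(* joint distribution of (x_t^{s+1}, \tilde x^s) *)
Definition history (sc : scheme) (n N B b d m : nat) (lam eta : R)
    (g : nat -> vec -> vec) (prox : vec -> vec) (s t : nat) (x0 : vec)
    : dist (vec * vec) :=
  dbind (snapshots sc n N B b d m lam eta g prox s x0) (fun xt =>
    dbind (inner_loop sc n N B b d lam eta g prox t xt xt) (fun x => dret (x, xt))).

(* joint distribution of (x_t^{s+1}, \tilde x^s, outcome of iteration t) *)
Definition joint (sc : scheme) (n N B b d m : nat) (lam eta : R)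
    (g : nat -> vec -> vec) (prox : vec -> vec) (s t : nat) (x0 : vec)
    : dist (vec * vec * StepOut) :=
  dbind (history sc n N B b d m lam eta g prox s t x0) (fun p =>
    dbind (step sc n N B b d lam g (fst p) (snd p)) (fun o => dret (fst p, snd p, o))).

Definition has_gradient (d : nat) (F : vec -> R) (G : vec -> vec) : Prop :=
  forall x eps, 0 < eps -> exists del, 0 < del /\
    forall y, norm d (vsub y x) < del ->
      Rabs (F y - F x - inner d (G x) (vsub y x)) <= eps * norm d (vsub y x).

(* extended-real valued h : R^d -> R u {+oo}; None = +oo *)
Definition ext_le (a c : option R) : Prop :=
  match a, c with
  | _, None => True
  | None, Some _ => False
  | Some a, Some c => a <= c
  end.
Definition ext_addR (a : option R) (r : R) : option R :=
  match a with None => None | Some a => Some (a + r) end.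

Definition proper (h : vec -> option R) : Prop := exists x r, h x = Some r.
Definition convex_ext (h : vec -> option R) : Prop :=
  forall x y a c th, h x = Some a -> h y = Some c -> 0 <= th <= 1 ->
    exists e, h (vadd (vscal th x) (vscal (1 - th) y)) = Some e /\
              e <= th * a + (1 - th) * c.
Definition lsc (d : nat) (h : vec -> option R) : Prop :=
  forall x r, ext_le (Some r) (h x) -> h x <> Some r ->   (* r < h x *)
    exists del, 0 < del /\ forall y, norm d (vsub y x) < del ->
      ext_le (Some r) (h y) /\ h y <> Some r.
Definition is_prox (d : nat) (eta : R) (h : vec -> option R) (prox : vec -> vec) : Prop :=
  forall x y, ext_le (ext_addR (h (prox x)) (sqnorm d (vsub (prox x) x) / (2 * eta)))
                     (ext_addR (h y) (sqnorm d (vsub y x) / (2 * eta))).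

(* Main.v *)
Require Import Defs.
From Stdlib Require Import Reals List.
From Stdlib Require Import Lra Lia ZArith Arith.
Import ListNotations.
Open Scope R_scope.

Definition mass {A} (m : Defs.dist A) := expect m (fun _ => 1).
Definition nonneg {A} (m : Defs.dist A) := forall p a, In (p, a) m -> 0 <= p.

Lemma expect_app {A} (l1 l2 : Defs.dist A) F :
  expect (l1 ++ l2) F = expect l1 F + expect l2 F.
Proof. induction l1 as [|[p a] l IH]; simpl; [lra|rewrite IH; lra]. Qed.

Lemma expect_smap {A} (l : Defs.dist A) p F :
  expect (map (fun qb => (p * fst qb, snd qb)) l) F = p * expect l F.
Proof. induction l as [|[q a] l IH]; simpl; [lra|rewrite IH; lra]. Qed.

Lemma expect_bind {A B} (m : Defs.dist A) (k : A -> Defs.dist B) F :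
  expect (dbind m k) F = expect m (fun a => expect (k a) F).
Proof.
  induction m as [|[p a] m IH]; simpl; auto.
  rewrite expect_app, expect_smap, IH; lra.
Qed.

Lemma expect_ret {A} (a : A) F : expect (dret a) F = F a.
Proof. simpl; lra. Qed.

Lemma expect_ext_in {A} (m : Defs.dist A) F G :
  (forall p a, In (p, a) m -> F a = G a) -> expect m F = expect m G.
Proof.
  induction m as [|[p a] m IH]; simpl; intros H; auto.
  rewrite (H p a (or_introl eq_refl)), IH; auto.
  intros; eapply H; right; eauto.
Qed.

Lemma expect_ext_pos {A} (m : Defs.dist A) F G : nonneg m ->
  (forall p a, In (p, a) m -> 0 < p -> F a = G a) -> expect m F = expect m G.
Proof.
  induction m as [|[p a] m IH]; simpl; intros Hn H; auto.
  assert (Hp : 0 <= p) by (eapply Hn; left; eauto).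
  rewrite IH.
  - destruct (Req_dec p 0) as [->|Hp0]; [lra|].
    rewrite (H p a (or_introl eq_refl)); lra.
  - intros q b Hq; eapply Hn; right; eauto.
  - intros; eapply H; [right|]; eauto.
Qed.

Lemma expect_le_pos {A} (m : Defs.dist A) F G : nonneg m ->
  (forall p a, In (p, a) m -> 0 < p -> F a <= G a) -> expect m F <= expect m G.
Proof.
  induction m as [|[p a] m IH]; simpl; intros Hn H; [lra|].
  assert (Hp : 0 <= p) by (eapply Hn; left; eauto).
  assert (expect m F <= expect m G).
  { apply IH. intros q b Hq; eapply Hn; right; eauto.
    intros; eapply H; [right|]; eauto. }
  destruct (Req_dec p 0) as [->|Hp0]; [lra|].
  assert (F a <= G a) by (apply (H p a (or_introl eq_refl)); lra).
  nra.
Qed.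

Lemma expect_plus {A} (m : Defs.dist A) F G :
  expect m (fun a => F a + G a) = expect m F + expect m G.
Proof. induction m as [|[p a] m IH]; simpl; [lra|rewrite IH; lra]. Qed.

Lemma expect_scal {A} (m : Defs.dist A) c F :
  expect m (fun a => c * F a) = c * expect m F.
Proof. induction m as [|[p a] m IH]; simpl; [lra|rewrite IH; lra]. Qed.

Lemma expect_const {A} (m : Defs.dist A) c :
  expect m (fun _ => c) = c * mass m.
Proof. unfold mass; induction m as [|[p a] m IH]; simpl; [lra|rewrite IH; lra]. Qed.

Lemma sumR_plus k F G : sumR k (fun j => F j + G j) = sumR k F + sumR k G.
Proof. induction k; simpl; [lra|rewrite IHk; lra]. Qed.
Lemma sumR_scal k c F : sumR k (fun j => c * F j) = c * sumR k F.
Proof. induction k; simpl; [lra|rewrite IHk; lra]. Qed.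
Lemma sumR_const k c : sumR k (fun _ => c) = INR k * c.
Proof. induction k; simpl sumR; [simpl; lra|rewrite IHk, S_INR; ring]. Qed.
Lemma sumR_ext k F G : (forall j, (j < k)%nat -> F j = G j) -> sumR k F = sumR k G.
Proof. induction k; simpl; intros H; auto. rewrite IHk, H; auto; intros; apply H; lia. Qed.
Lemma sumR_le k F G : (forall j, (j < k)%nat -> F j <= G j) -> sumR k F <= sumR k G.
Proof. induction k; simpl; intros H; [lra|]. assert (F k <= G k) by (apply H; lia).
  assert (sumR k F <= sumR k G) by (apply IHk; intros; apply H; lia). lra. Qed.
Lemma sumR_nonneg k F : (forall j, (j < k)%nat -> 0 <= F j) -> 0 <= sumR k F.
Proof. intros H. rewrite <- (Rmult_0_r (INR k)), <- sumR_const. apply sumR_le; auto. Qed.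
Lemma sumR_swap k l (F : nat -> nat -> R) :
  sumR k (fun j => sumR l (fun a => F j a)) = sumR l (fun a => sumR k (fun j => F j a)).
Proof. induction k; simpl. { rewrite sumR_const; ring. }
  rewrite IHk, <- sumR_plus; auto. Qed.
Lemma sumR_shift k F : sumR (S k) F = F O + sumR k (fun i => F (S i)).
Proof. induction k; simpl; [lra|]. simpl in IHk. rewrite IHk. lra. Qed.

Lemma expect_sumR {A} (m : Defs.dist A) k F :
  expect m (fun a => sumR k (fun j => F j a)) = sumR k (fun j => expect m (F j)).
Proof. induction k; simpl.
  - rewrite expect_const; lra.
  - rewrite expect_plus, IHk; auto. Qed.

Lemma In_bind_elim {A B} (m : Defs.dist A) (k : A -> Defs.dist B) p b :
  In (p, b) (dbind m k) -> exists q a r, In (q, a) m /\ In (r, b) (k a) /\ p = q * r.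
Proof.
  induction m as [|[q a] m IH]; simpl; [tauto|].
  intros H; apply in_app_or in H as [H|H].
  - apply in_map_iff in H as [[r c] [E Hin]]; simpl in E; inversion E; subst.
    exists q, a, r; auto.
  - destruct (IH H) as (q' & a' & r & H1 & H2 & H3); exists q', a', r; auto.
Qed.

Lemma In_bind_intro {A B} (m : Defs.dist A) (k : A -> Defs.dist B) q a r b :
  In (q, a) m -> In (r, b) (k a) -> In (q * r, b) (dbind m k).
Proof.
  induction m as [|[q' a'] m IH]; simpl; [tauto|].
  intros [E|H] H2; apply in_or_app.
  - inversion E; subst. left. apply (in_map (fun qb => (q * fst qb, snd qb)) _ (r, b)); auto.
  - right; auto.
Qed.

Lemma nonneg_bind {A B} (m : Defs.dist A) (k : A -> Defs.dist B) : nonneg m ->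
  (forall p a, In (p, a) m -> nonneg (k a)) -> nonneg (dbind m k).
Proof.
  intros H1 H2 p b Hin. apply In_bind_elim in Hin as (q & a & r & Ha & Hb & ->).
  apply Rmult_le_pos; [eapply H1|eapply H2]; eauto.
Qed.

Lemma pos_bind_elim {A B} (m : Defs.dist A) (k : A -> Defs.dist B) p b : nonneg m ->
  (forall p a, In (p, a) m -> nonneg (k a)) -> In (p, b) (dbind m k) -> 0 < p ->
  exists q a r, In (q, a) m /\ 0 < q /\ In (r, b) (k a) /\ 0 < r.
Proof.
  intros H1 H2 Hin Hp. apply In_bind_elim in Hin as (q & a & r & Ha & Hb & ->).
  assert (0 <= q) by (eapply H1; eauto). assert (0 <= r) by (eapply H2; eauto).
  exists q, a, r; repeat split; auto.
  - destruct (Req_dec q 0); [subst; lra|lra].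
  - destruct (Req_dec r 0); [subst; lra|lra].
Qed.

Lemma nonneg_ret {A} (a : A) : nonneg (dret a).
Proof. intros p b [E|[]]; inversion E; lra. Qed.

Lemma mass_bind {A B} (m : Defs.dist A) (k : A -> Defs.dist B) :
  (forall p a, In (p, a) m -> mass (k a) = 1) -> mass (dbind m k) = mass m.
Proof. intros H. unfold mass at 1. rewrite expect_bind. apply expect_ext_in; eauto. Qed.

Lemma mass_ret {A} (a : A) : mass (dret a) = 1.
Proof. unfold mass; simpl; lra. Qed.

Lemma exists_pos {A} (m : Defs.dist A) : nonneg m -> mass m = 1 ->
  exists p a, In (p, a) m /\ 0 < p.
Proof.
  unfold mass; induction m as [|[p a] m IH]; simpl; intros Hn Hm; [lra|].
  assert (0 <= p) by (eapply Hn; left; eauto).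
  destruct (Req_dec p 0) as [->|Hp].
  - destruct IH as (q & b & H1 & H2). intros q b Hq; eapply Hn; right; eauto. lra.
    exists q, b; auto.
  - exists p, a; split; auto; lra.
Qed.

Lemma expect_quad {A} (m : Defs.dist A) c Y :
  expect m (fun l => (c + Y l) ^ 2) = c ^ 2 * mass m + 2 * c * expect m Y + expect m (fun l => Y l ^ 2).
Proof.
  rewrite (expect_ext_in m _ (fun l => c ^ 2 + ((2 * c) * Y l + Y l ^ 2))) by (intros; ring).
  rewrite expect_plus, expect_plus, expect_const, expect_scal. ring.
Qed.

Definition grid (dl y : R) := exists k : Z, y = dl * IZR k.
Definition oind (dl : R) (b : nat) (x : R) : R :=
  if Rlt_dec x (qlo dl b) then 1 else if Rlt_dec (qhi dl b) x then 1 else 0.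

Definition PZ (b : nat) : Z := (2 ^ Z.of_nat (b - 1))%Z.
Lemma PZ_eq b : 2 ^ (b - 1) = IZR (PZ b).
Proof. unfold PZ. rewrite <- pow_IZR. reflexivity. Qed.

Lemma qlo_eq dl b : qlo dl b = dl * IZR (- PZ b).
Proof. unfold qlo. rewrite PZ_eq, opp_IZR. ring. Qed.
Lemma qhi_eq dl b : qhi dl b = dl * IZR (PZ b - 1).
Proof. unfold qhi. rewrite PZ_eq, minus_IZR. ring. Qed.

Lemma Qsc_zero b x : Qsc 0 b x = dret 0.
Proof. unfold Qsc. destruct (Req_EM_T 0 0); [auto|lra]. Qed.

Lemma Qsc_mid dl b x : dl <> 0 -> ~ x < qlo dl b -> ~ qhi dl b < x ->
  Qsc dl b x = [((dl * IZR (Int_part (x / dl)) + dl - x) / dl, dl * IZR (Int_part (x / dl)));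
                ((x - dl * IZR (Int_part (x / dl))) / dl, dl * IZR (Int_part (x / dl)) + dl)].
Proof.
  intros H1 H2 H3. unfold Qsc.
  destruct (Req_EM_T dl 0); [contradiction|].
  destruct (Rlt_dec x (qlo dl b)); [contradiction|].
  destruct (Rlt_dec (qhi dl b) x); [contradiction|]. reflexivity.
Qed.

Lemma Int_bounds dl x : 0 < dl ->
  dl * IZR (Int_part (x / dl)) <= x < dl * IZR (Int_part (x / dl)) + dl.
Proof.
  intros Hd. destruct (base_Int_part (x / dl)) as [H1 H2].
  set (k := IZR (Int_part (x / dl))) in *.
  assert (x = dl * (x / dl)) by (field; lra).
  split; nra.
Qed.

Lemma Qsc_basic dl b x : 0 <= dl -> mass (Qsc dl b x) = 1 /\ nonneg (Qsc dl b x).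
Proof.
  intros Hd. destruct (Req_dec dl 0) as [->|Hd0].
  { rewrite Qsc_zero; split; [apply mass_ret|apply nonneg_ret]. }
  unfold Qsc. destruct (Req_EM_T dl 0); [contradiction|].
  destruct (Rlt_dec x (qlo dl b)); [split; [apply mass_ret|apply nonneg_ret]|].
  destruct (Rlt_dec (qhi dl b) x); [split; [apply mass_ret|apply nonneg_ret]|].
  cbv zeta. pose proof (Int_bounds dl x ltac:(lra)) as [I1 I2].
  set (z := dl * IZR (Int_part (x / dl))) in *.
  split.
  - unfold mass; simpl. field. auto.
  - intros p a [E|[E|[]]]; inversion E; subst; unfold Rdiv;
      apply Rmult_le_pos; try lra; left; apply Rinv_0_lt_compat; lra.
Qed.

Lemma Qsc_supp dl b x : 0 <= dl -> (2 <= b)%nat ->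
  forall p q, In (p, q) (Qsc dl b x) -> 0 < p ->
  qlo dl b <= q <= qhi dl b /\ grid dl q.
Proof.
  intros Hd Hb p q Hin Hp.
  assert (HP : 2 <= IZR (PZ b)).
  { rewrite <- PZ_eq. replace (b - 1)%nat with (S (b - 2)) by lia. simpl.
    pose proof (pow_R1_Rle 2 (b - 2) ltac:(lra)). lra. }
  assert (Hlh : qlo dl b <= qhi dl b) by (rewrite qlo_eq, qhi_eq, opp_IZR, minus_IZR; nra).
  destruct (Req_dec dl 0) as [->|Hd0].
  { rewrite Qsc_zero in Hin. destruct Hin as [E|[]]; inversion E; subst.
    unfold qlo, qhi; split; [lra|]. exists 0%Z; lra. }
  unfold Qsc in Hin. destruct (Req_EM_T dl 0); [contradiction|].
  destruct (Rlt_dec x (qlo dl b)).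
  { destruct Hin as [E|[]]; inversion E; subst. split; [lra|]. exists (- PZ b)%Z; apply qlo_eq. }
  destruct (Rlt_dec (qhi dl b) x).
  { destruct Hin as [E|[]]; inversion E; subst. split; [lra|]. exists (PZ b - 1)%Z; apply qhi_eq. }
  cbv zeta in Hin.
  pose proof (base_Int_part (x / dl)) as [K1 K2].
  assert (Hx : x = dl * (x / dl)) by (field; lra).
  set (k := Int_part (x / dl)) in *.
  assert (Hdp : 0 < dl) by lra.
  rewrite qlo_eq, qhi_eq in *.
  assert (A1 : IZR (- PZ b) <= x / dl).
  { apply (Rmult_le_reg_l dl); [lra|]. lra. }
  assert (A2 : x / dl <= IZR (PZ b - 1)).
  { apply (Rmult_le_reg_l dl); [lra|]. lra. }
  assert (Hlo : (- PZ b <= k)%Z).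
  { assert (IZR (- PZ b - 1) < IZR k) by (rewrite minus_IZR; lra).
    apply lt_IZR in H. lia. }
  apply IZR_le in Hlo.
  destruct Hin as [E|[E|[]]]; inversion E; subst.
  - split; [split|exists k; auto].
    + nra.
    + assert (IZR k <= IZR (PZ b - 1)) by lra. nra.
  - assert (Hxz : dl * IZR k < x).
    { unfold Rdiv in Hp. assert (0 < / dl) by (apply Rinv_0_lt_compat; lra).
      destruct (Rle_dec x (dl * IZR k)); [|lra].
      assert ((x - dl * IZR k) * / dl <= 0); [|lra].
      assert ((dl * IZR k - x) * / dl >= 0) by (apply Rle_ge, Rmult_le_pos; lra). lra. }
    assert (Hk : (k < PZ b - 1)%Z).
    { apply lt_IZR. assert (IZR k < x / dl); [|lra].
      apply (Rmult_lt_reg_l dl); [lra|]. lra. }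
    assert (Hk' : IZR (k + 1) <= IZR (PZ b - 1)) by (apply IZR_le; lia).
    rewrite plus_IZR in Hk'.
    split; [split|exists (k + 1)%Z; rewrite plus_IZR; ring].
    + nra.
    + nra.
Qed.

Lemma oind_01 dl b x : oind dl b x = 0 \/ oind dl b x = 1.
Proof. unfold oind; destruct (Rlt_dec _ _); auto; destruct (Rlt_dec _ _); auto. Qed.

Lemma mid_moments dl b x : 0 < dl -> ~ x < qlo dl b -> ~ qhi dl b < x ->
  expect (Qsc dl b x) (fun q => q - x) = 0 /\
  expect (Qsc dl b x) (fun q => (q - x) ^ 2) =
    (dl * IZR (Int_part (x / dl)) + dl - x) * (x - dl * IZR (Int_part (x / dl))).
Proof.
  intros Hd H1 H2. rewrite Qsc_mid by lra. simpl.
  set (z := dl * IZR (Int_part (x / dl))). split; field; lra.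
Qed.

Lemma Qsc_mom dl b x lam A : 0 <= dl -> (2 <= b)%nat -> 0 < lam <= 1 ->
  lam * A <= (2 ^ (b - 1) - 1) * dl -> Rabs x <= A ->
  (expect (Qsc dl b x) (fun q => q - x)) ^ 2 <= oind dl b x * (1 - lam) ^ 2 * A ^ 2 /\
  expect (Qsc dl b x) (fun q => (q - x) ^ 2) - (expect (Qsc dl b x) (fun q => q - x)) ^ 2
    <= dl ^ 2 / 4.
Proof.
  intros Hd Hb Hl HA Hx.
  assert (HP : 2 <= 2 ^ (b - 1)).
  { replace (b - 1)%nat with (S (b - 2)) by lia. simpl.
    pose proof (pow_R1_Rle 2 (b - 2) ltac:(lra)). lra. }
  assert (HA0 : 0 <= A) by (pose proof (Rabs_pos x); lra).
  assert (Hx1 : - A <= x) by (unfold Rabs in Hx; destruct (Rcase_abs x); lra).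
  assert (Hx2 : x <= A) by (unfold Rabs in Hx; destruct (Rcase_abs x); lra).
  assert (Ho : 0 <= oind dl b x) by (destruct (oind_01 dl b x) as [->| ->]; lra).
  destruct (Req_dec dl 0) as [->|Hd0].
  { rewrite Qsc_zero. simpl.
    assert (A = 0) by nra. subst A. assert (x = 0) by lra. subst x. nra. }
  assert (Hdp : 0 < dl) by lra.
  unfold oind. unfold Qsc at 1 2 3.
  destruct (Req_EM_T dl 0); [contradiction|].
  destruct (Rlt_dec x (qlo dl b)) as [Hlo|Hlo].
  { simpl. unfold qlo in *. split; [|nra].
    assert (0 <= - 2 ^ (b - 1) * dl - x <= (1 - lam) * A) by nra.
    assert (0 <= (1 - lam) * A) by nra. nra. }
  destruct (Rlt_dec (qhi dl b) x) as [Hhi|Hhi].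
  { simpl. unfold qhi in *. split; [|nra].
    assert (0 <= x - (2 ^ (b - 1) - 1) * dl <= (1 - lam) * A) by nra.
    assert (0 <= (1 - lam) * A) by nra. nra. }
  cbv zeta. pose proof (mid_moments dl b x Hdp Hlo Hhi) as [E1 E2].
  rewrite Qsc_mid in E1, E2 by lra. rewrite E1, E2.
  pose proof (Int_bounds dl x Hdp).
  set (z := dl * IZR (Int_part (x / dl))) in *. split; [lra|]. assert (0 <= (dl / 2 - (x - z)) ^ 2) by apply pow2_ge_0. lra.
Qed.

Lemma Qsc_in dl b x : 0 <= dl -> (2 <= b)%nat -> qlo dl b <= x <= qhi dl b ->
  expect (Qsc dl b x) (fun q => q - x) = 0 /\
  expect (Qsc dl b x) (fun q => (q - x) ^ 2) <= dl ^ 2 / 4 /\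
  (grid dl x -> expect (Qsc dl b x) (fun q => (q - x) ^ 2) = 0).
Proof.
  intros Hd Hb Hx.
  destruct (Req_dec dl 0) as [->|Hd0].
  { rewrite Qsc_zero. unfold qlo, qhi in Hx. simpl.
    assert (x = 0) by lra. subst x. repeat split; intros; lra. }
  assert (Hdp : 0 < dl) by lra.
  assert (Hlo : ~ x < qlo dl b) by lra. assert (Hhi : ~ qhi dl b < x) by lra.
  pose proof (mid_moments dl b x Hdp Hlo Hhi) as [E1 E2].
  rewrite E1, E2. pose proof (Int_bounds dl x Hdp).
  split; [auto|split].
  - set (z := dl * IZR (Int_part (x / dl))) in *. assert (0 <= (dl / 2 - (x - z)) ^ 2) by apply pow2_ge_0. lra.
  - intros [j Hj].
    assert (Int_part (x / dl) = j).
    { symmetry. apply Int_part_spec. rewrite Hj.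
      replace (dl * IZR j / dl) with (IZR j) by (field; lra). lra. }
    rewrite H0, <- Hj. ring.
Qed.

Lemma Qvec_basic dl b x k : 0 <= dl ->
  mass (Qvec_aux dl b x k) = 1 /\ nonneg (Qvec_aux dl b x k).
Proof.
  intros Hd. induction k as [|k IH]; simpl.
  - split; [apply mass_ret|apply nonneg_ret].
  - destruct IH as [IH1 IH2]. destruct (Qsc_basic dl b (x k) Hd) as [Q1 Q2]. split.
    + rewrite mass_bind; auto. intros. rewrite mass_bind; auto. intros; apply mass_ret.
    + apply nonneg_bind; auto. intros. apply nonneg_bind; auto. intros; apply nonneg_ret.
Qed.

Lemma Qvec_marg dl b x k j (F : R -> R) : 0 <= dl -> (j < k)%nat ->
  expect (Qvec_aux dl b x k) (fun q => F (q j)) = expect (Qsc dl b (x j)) F.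
Proof.
  intros Hd. induction k as [|k IH]; intros Hj; [lia|]. simpl.
  rewrite expect_bind.
  destruct (Qsc_basic dl b (x k) Hd) as [Q1 Q2].
  destruct (Qvec_basic dl b x k Hd) as [V1 V2].
  destruct (Nat.eq_dec j k) as [->|Hjk].
  - rewrite (expect_ext_in _ _ (fun _ => expect (Qsc dl b (x k)) F)).
    + rewrite expect_const, V1; ring.
    + intros p a _. rewrite expect_bind. apply expect_ext_in. intros.
      rewrite expect_ret. rewrite Nat.eqb_refl. auto.
  - rewrite (expect_ext_in _ _ (fun y => F (y j))).
    + apply IH; lia.
    + intros p a _. rewrite expect_bind.
      rewrite (expect_ext_in _ _ (fun _ => F (a j))).
      * rewrite expect_const, Q1; ring.
      * intros. rewrite expect_ret. apply Nat.eqb_neq in Hjk. rewrite Hjk. auto.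
Qed.

Lemma Qvec_supp dl b x k : 0 <= dl -> forall p q, In (p, q) (Qvec_aux dl b x k) -> 0 < p ->
  forall j, (j < k)%nat -> exists p', In (p', q j) (Qsc dl b (x j)) /\ 0 < p'.
Proof.
  intros Hd. induction k as [|k IH]; intros p q Hin Hp j Hj; [lia|]. simpl in Hin.
  destruct (Qsc_basic dl b (x k) Hd) as [Q1 Q2].
  destruct (Qvec_basic dl b x k Hd) as [V1 V2].
  apply pos_bind_elim in Hin as (q1 & y & r & H1 & H2 & H3 & H4); auto.
  2:{ intros; apply nonneg_bind; auto; intros; apply nonneg_ret. }
  apply pos_bind_elim in H3 as (q2 & z & r2 & G1 & G2 & G3 & G4); auto.
  2:{ intros; apply nonneg_ret. }
  destruct G3 as [E|[]]. inversion E; subst.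
  destruct (Nat.eq_dec j k) as [->|Hjk].
  - rewrite Nat.eqb_refl. exists q2; auto.
  - apply Nat.eqb_neq in Hjk. rewrite Hjk. eapply IH; eauto. apply Nat.eqb_neq in Hjk; lia.
Qed.

Definition sumL {A} (F : A -> R) (l : list A) : R := fold_right (fun a acc => F a + acc) 0 l.

Lemma sumL_le {A} (F G : A -> R) l : (forall a, In a l -> F a <= G a) -> sumL F l <= sumL G l.
Proof. induction l; simpl; intros H; [lra|]. pose proof (H a (or_introl eq_refl)).
  assert (sumL F l <= sumL G l) by (apply IHl; auto). lra. Qed.
Lemma sumL_const {A} c (l : list A) : sumL (fun _ => c) l = INR (length l) * c.
Proof. induction l; simpl sumL; simpl length; [simpl; ring|rewrite IHl, S_INR; ring]. Qed.
Lemma sumL_plus {A} (F G : A -> R) l : sumL (fun a => F a + G a) l = sumL F l + sumL G l.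
Proof. induction l; simpl; [ring|rewrite IHl; ring]. Qed.
Lemma sumL_scal {A} (F : A -> R) c l : sumL (fun a => c * F a) l = c * sumL F l.
Proof. induction l; simpl; [ring|rewrite IHl; ring]. Qed.
Lemma sumL_nonneg {A} (F : A -> R) l : (forall a, In a l -> 0 <= F a) -> 0 <= sumL F l.
Proof. intros H. rewrite <- (Rmult_0_r (INR (length l))), <- sumL_const. apply sumL_le; auto. Qed.
Lemma sumR_sumL {A} k (F : nat -> A -> R) l :
  sumR k (fun j => sumL (F j) l) = sumL (fun a => sumR k (fun j => F j a)) l.
Proof. induction l; simpl.
  - induction k; simpl; [ring|rewrite IHk; ring].
  - rewrite sumR_plus, IHl. auto. Qed.

Lemma cauchy {A} (F : A -> R) l : (sumL F l) ^ 2 <= INR (length l) * sumL (fun a => F a ^ 2) l.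
Proof.
  induction l as [|a l IH]; simpl sumL; simpl length; [simpl; lra|].
  rewrite S_INR.
  set (S := sumL F l) in *. set (Q := sumL (fun a => F a ^ 2) l) in *.
  set (k := INR (length l)) in *.
  assert (Hk : 0 <= k) by apply pos_INR.
  assert (HQ : 0 <= Q) by (apply sumL_nonneg; intros; apply pow2_ge_0).
  set (x := F a).
  assert (2 * x * S <= k * x ^ 2 + Q).
  { destruct (Req_dec k 0) as [Hk0|Hk0].
    - rewrite Hk0 in IH. assert (S = 0) by nra. subst k. rewrite H. nra.
    - apply (Rmult_le_reg_l k); [lra|].
      assert (0 <= (k * x - S) ^ 2) by apply pow2_ge_0. nra. }
  change (x * (x * 1) + sumL (fun a0 => F a0 * (F a0 * 1)) l) with (x ^ 2 + Q). lra.
Qed.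

Section QL.
Variables (b d j : nat).
Definition fq (qs : list vec) : R := fold_right (fun v acc => v j + acc) 0 qs.
Definition beta (dl : R) (u : vec) := expect (Qvec dl b d u) (fun q => q j - u j).
Definition sec (dl : R) (u : vec) := expect (Qvec dl b d u) (fun q => (q j - u j) ^ 2).
Definition sumb (F : R -> vec -> R) ds us := sumL (fun p => F (fst p) (snd p)) (combine ds us).

Lemma sumb_cons F dl ds u us : sumb F (dl :: ds) (u :: us) = F dl u + sumb F ds us.
Proof. reflexivity. Qed.

Lemma Qlist_mom ds : forall us, (forall dl, In dl ds -> 0 <= dl) -> length ds = length us ->
  mass (Qlist b d ds us) = 1 /\ nonneg (Qlist b d ds us) /\
  expect (Qlist b d ds us) (fun qs => fq qs - fq us) = sumb beta ds us /\
  expect (Qlist b d ds us) (fun qs => (fq qs - fq us) ^ 2) =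
    sumb (fun dl u => sec dl u - beta dl u ^ 2) ds us + (sumb beta ds us) ^ 2.
Proof.
  induction ds as [|dl ds IH]; intros [|u us] Hd Hl; simpl in Hl; try discriminate.
  - simpl. unfold mass, sumb, fq; simpl. repeat split; try lra. apply nonneg_ret.
  - injection Hl as Hl.
    assert (Hdl : 0 <= dl) by (apply Hd; left; auto).
    destruct (IH us (fun x H => Hd x (or_intror H)) Hl) as (M & NN & E1 & E2).
    destruct (Qvec_basic dl b u d Hdl) as [V1 V2].
    change (Qvec_aux dl b u d) with (Qvec dl b d u) in V1, V2.
    assert (V1x : mass (A:=nat->R) (Qvec dl b d u) = 1) by exact V1.
    unfold Qlist; fold (Qlist b d ds us).
    rewrite !sumb_cons.
    set (SB := sumb beta ds us) in *.
    set (SV := sumb (fun dl u => sec dl u - beta dl u ^ 2) ds us) in *.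
    split; [|split; [|split]].
    + rewrite mass_bind; auto. intros. rewrite mass_bind; auto. intros; apply mass_ret.
    + apply nonneg_bind; auto. intros. apply nonneg_bind; auto. intros; apply nonneg_ret.
    + rewrite expect_bind.
      rewrite (expect_ext_in _ _ (fun q => (q j - u j) + SB)).
      * rewrite expect_plus, expect_const, V1x. unfold beta. rewrite Rmult_1_r. reflexivity.
      * intros p q _. rewrite expect_bind.
        rewrite (expect_ext_in _ _ (fun qs => (q j - u j) + (fq qs - fq us))).
        -- rewrite expect_plus, expect_const, M, E1. ring.
        -- intros. rewrite expect_ret. unfold fq; simpl. ring.
    + rewrite expect_bind.
      rewrite (expect_ext_in _ _ (fun q => (q j - u j) ^ 2 + (2 * SB) * (q j - u j) + (SV + SB ^ 2))).
      * rewrite !expect_plus, !expect_const, expect_scal, V1x.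
        change (expect (Qvec dl b d u) (fun a : nat -> R => (a j - u j) ^ 2)) with (sec dl u).
        change (expect (Qvec dl b d u) (fun a : nat -> R => (a j - u j))) with (beta dl u).
        ring.
      * intros p q _. rewrite expect_bind.
        rewrite (expect_ext_in _ _ (fun qs => ((q j - u j) + (fq qs - fq us)) ^ 2)).
        -- rewrite expect_quad, M, E1, E2. ring.
        -- intros. rewrite expect_ret. unfold fq; simpl. ring.
Qed.

Lemma Qlist_basic ds : forall us, (forall dl, In dl ds -> 0 <= dl) ->
  mass (Qlist b d ds us) = 1 /\ nonneg (Qlist b d ds us).
Proof.
  induction ds as [|dl ds IH]; intros [|u us] Hd; simpl;
    try (split; [apply mass_ret|apply nonneg_ret]).
  assert (Hdl : 0 <= dl) by (apply Hd; left; auto).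
  destruct (IH us (fun x H => Hd x (or_intror H))) as (M & NN).
  destruct (Qvec_basic dl b u d Hdl) as [V1 V2]. fold (Qlist b d ds us).
  split.
  + rewrite mass_bind; auto. intros. rewrite mass_bind; auto. intros; apply mass_ret.
  + apply nonneg_bind; auto. intros. apply nonneg_bind; auto. intros; apply nonneg_ret.
Qed.

Lemma Qlist_supp ds : forall us, (forall dl, In dl ds -> 0 <= dl) ->
  forall p qs, In (p, qs) (Qlist b d ds us) -> 0 < p ->
  length qs = Nat.min (length ds) (length us) /\
  forall q, In q qs -> exists dl u p', In (dl, u) (combine ds us) /\ In (p', q) (Qvec dl b d u) /\ 0 < p'.
Proof.
  induction ds as [|dl ds IH]; intros [|u us] Hd p qs Hin Hp; simpl in Hin;
    try (destruct Hin as [E|[]]; inversion E; subst; simpl; split; [auto|intros _ []]).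
  assert (Hdl : 0 <= dl) by (apply Hd; left; auto).
  destruct (Qvec_basic dl b u d Hdl) as [V1 V2].
  assert (Hd' : forall x, In x ds -> 0 <= x) by (intros; apply Hd; right; auto).
  destruct (Qlist_basic ds us Hd') as [M NN].
  fold (Qlist b d ds us) in Hin.
  apply pos_bind_elim in Hin as (q1 & q & r & H1 & H2 & H3 & H4); auto.
  2:{ intros; apply nonneg_bind; auto; intros; apply nonneg_ret. }
  apply pos_bind_elim in H3 as (q2 & qs' & r2 & G1 & G2 & G3 & G4); auto.
  2:{ intros; apply nonneg_ret. }
  destruct G3 as [E|[]]. inversion E; subst.
  destruct (IH us Hd' q2 qs' G1 G2) as [L1 L2].
  simpl. split; [lia|].
  intros q' [<-|Hq'].
  - exists dl, u, q1. auto.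
  - destruct (L2 q' Hq') as (dl' & u' & p' & K1 & K2 & K3). exists dl', u', p'. auto.
Qed.
End QL.

Fixpoint iid {A} (k : nat) (m : Defs.dist A) : Defs.dist (list A) :=
  match k with
  | O => dret []
  | S k' => dbind m (fun a => dbind (iid k' m) (fun l => dret (a :: l)))
  end.

Lemma sampleB_iid B n : sampleB B n = iid B (unif n).
Proof. induction B; simpl; auto. rewrite IHB; auto. Qed.
Lemma sw_iid N B n : sample_workers N B n = iid N (sampleB B n).
Proof. induction N; simpl; auto. rewrite IHN; auto. Qed.

Lemma iid_basic {A} k (m : Defs.dist A) : mass m = 1 -> nonneg m ->
  mass (iid k m) = 1 /\ nonneg (iid k m).
Proof.
  intros M NN. induction k as [|k [IH1 IH2]]; simpl; [split; [apply mass_ret|apply nonneg_ret]|].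
  split.
  + rewrite mass_bind; auto. intros. rewrite mass_bind; auto. intros; apply mass_ret.
  + apply nonneg_bind; auto. intros. apply nonneg_bind; auto. intros; apply nonneg_ret.
Qed.

Lemma iid_supp {A} k (m : Defs.dist A) : mass m = 1 -> nonneg m ->
  forall p l, In (p, l) (iid k m) -> 0 < p ->
  length l = k /\ forall a, In a l -> exists p', In (p', a) m /\ 0 < p'.
Proof.
  intros M NN. induction k as [|k IH]; intros p l Hin Hp; simpl in Hin.
  - destruct Hin as [E|[]]; inversion E; subst. simpl; split; [auto|intros _ []].
  - destruct (iid_basic k m M NN) as [M' NN'].
    apply pos_bind_elim in Hin as (q1 & a & r & H1 & H2 & H3 & H4); auto.
    2:{ intros; apply nonneg_bind; auto; intros; apply nonneg_ret. }
    apply pos_bind_elim in H3 as (q2 & l' & r2 & G1 & G2 & G3 & G4); auto.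
    2:{ intros; apply nonneg_ret. }
    destruct G3 as [E|[]]. inversion E; subst.
    destruct (IH q2 l' G1 G2) as [L1 L2]. simpl. split; [lia|].
    intros a' [<-|Ha]; [exists q1; auto|auto].
Qed.

Lemma iid_var {A} k (m : Defs.dist A) (X : A -> R) V : mass m = 1 -> nonneg m ->
  expect m X = 0 -> expect m (fun a => X a ^ 2) = V ->
  expect (iid k m) (sumL X) = 0 /\ expect (iid k m) (fun l => sumL X l ^ 2) = INR k * V.
Proof.
  intros M NN E1 E2. induction k as [|k [IH1 IH2]]; simpl iid.
  - rewrite !expect_ret. simpl; split; ring.
  - destruct (iid_basic k m M NN) as [M' NN']. rewrite !expect_bind. split.
    + rewrite (expect_ext_in _ _ (fun a => X a)); auto.
      intros p a _. rewrite expect_bind.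
      rewrite (expect_ext_in _ _ (fun l => X a + sumL X l)).
      * rewrite expect_plus, expect_const, M', IH1; ring.
      * intros; rewrite expect_ret; reflexivity.
    + rewrite (expect_ext_in _ _ (fun a => X a ^ 2 + INR k * V)).
      * rewrite expect_plus, expect_const, M, E2, S_INR; ring.
      * intros p a _. rewrite expect_bind.
        rewrite (expect_ext_in _ _ (fun l => (X a + sumL X l) ^ 2)).
        -- rewrite expect_quad, M', IH1, IH2; ring.
        -- intros; rewrite expect_ret; reflexivity.
Qed.

Lemma expect_seq (c : R) s k (F : nat -> R) :
  expect (map (fun i => (c, i)) (seq s k)) F = c * sumR k (fun i => F (s + i)%nat).
Proof.
  revert s. induction k; intros s; [simpl; ring|].
  rewrite (sumR_shift k (fun i => F (s + i)%nat)).
  simpl seq. simpl map. simpl expect. rewrite IHk. rewrite Nat.add_0_r.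
  rewrite (sumR_ext k (fun i => F (S s + i)%nat) (fun i => F (s + S i)%nat)) by (intros; f_equal; lia).
  ring.
Qed.

Lemma expect_unif n F : expect (unif n) F = / INR n * sumR n F.
Proof. unfold unif. rewrite expect_seq. reflexivity. Qed.

Lemma unif_basic n : (0 < n)%nat -> mass (unif n) = 1 /\ nonneg (unif n).
Proof.
  intros Hn. split.
  - unfold mass. rewrite expect_unif, sumR_const. field. apply not_0_INR; lia.
  - intros p a Hin. unfold unif in Hin. apply in_map_iff in Hin as [i [E _]].
    inversion E. left. apply Rinv_0_lt_compat, lt_0_INR; auto.
Qed.

Lemma unif_supp n p a : In (p, a) (unif n) -> (a < n)%nat.
Proof. unfold unif. intros Hin. apply in_map_iff in Hin as [i [E Hi]]. inversion E; subst.
  apply in_seq in Hi. lia. Qed.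

Lemma sumL_ext {A} (F G : A -> R) l : (forall a, In a l -> F a = G a) -> sumL F l = sumL G l.
Proof. induction l; simpl; intros H; auto. rewrite H, IHl; auto. Qed.

Lemma fold_map_sumL {A} (f : A -> vec) j l :
  fold_right (fun v acc => v j + acc) 0 (map f l) = sumL (fun a => f a j) l.
Proof. induction l; simpl; auto. rewrite IHl; auto. Qed.

Section Samp.
Variables (n N B d : nat) (g : nat -> vec -> vec) (x xt : vec).
Hypotheses (Hn : (0 < n)%nat) (HN : (0 < N)%nat) (HB : (0 < B)%nat).

Definition ee a j := g a x j - g a xt j.
Definition mu j := / INR n * sumR n (fun a => ee a j).
Definition Xj j a := ee a j - mu j.
Definition Vj j := / INR n * sumR n (fun a => Xj j a ^ 2).

Lemma INRn : INR n <> 0. Proof. apply not_0_INR; lia. Qed.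
Lemma INRN : INR N <> 0. Proof. apply not_0_INR; lia. Qed.
Lemma INRB : INR B <> 0. Proof. apply not_0_INR; lia. Qed.

Lemma sumR_X j : sumR n (Xj j) = 0.
Proof.
  unfold Xj. rewrite (sumR_ext n _ (fun a => ee a j + (- mu j))) by (intros; ring).
  rewrite sumR_plus, sumR_const. unfold mu. field. apply INRn.
Qed.

Lemma unif_X j : expect (unif n) (Xj j) = 0 /\ expect (unif n) (fun a => Xj j a ^ 2) = Vj j.
Proof. rewrite !expect_unif, sumR_X. split; [ring|reflexivity]. Qed.

Lemma sampleB_basic : mass (sampleB B n) = 1 /\ nonneg (sampleB B n).
Proof. rewrite sampleB_iid. destruct (unif_basic n Hn). apply iid_basic; auto. Qed.

Lemma sw_basic : mass (sample_workers N B n) = 1 /\ nonneg (sample_workers N B n).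
Proof. rewrite sw_iid. destruct sampleB_basic. apply iid_basic; auto. Qed.

Lemma sampleB_supp p I : In (p, I) (sampleB B n) -> 0 < p ->
  length I = B /\ forall a, In a I -> (a < n)%nat.
Proof.
  rewrite sampleB_iid. destruct (unif_basic n Hn) as [M NN]. intros H1 H2.
  destruct (iid_supp B _ M NN p I H1 H2) as [L1 L2]. split; auto.
  intros a Ha. destruct (L2 a Ha) as [p' [H3 _]]. eapply unif_supp; eauto.
Qed.

Lemma sw_supp p Is : In (p, Is) (sample_workers N B n) -> 0 < p ->
  length Is = N /\ forall I, In I Is -> length I = B /\ forall a, In a I -> (a < n)%nat.
Proof.
  rewrite sw_iid. destruct sampleB_basic as [M NN]. intros H1 H2.
  destruct (iid_supp N _ M NN p Is H1 H2) as [L1 L2]. split; auto.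
  intros I HI. destruct (L2 I HI) as [p' [H3 H4]].
  eapply sampleB_supp; eauto.
Qed.

Lemma sw_var j : expect (sample_workers N B n) (fun Is => sumL (sumL (Xj j)) Is ^ 2)
  = INR N * (INR B * Vj j).
Proof.
  destruct (unif_basic n Hn) as [M NN]. destruct (unif_X j) as [E1 E2].
  destruct (iid_var B _ _ _ M NN E1 E2) as [F1 F2].
  destruct sampleB_basic as [M' NN'].
  rewrite sampleB_iid in M', NN'.
  destruct (iid_var N _ _ _ M' NN' F1 F2) as [G1 G2].
  rewrite sw_iid, sampleB_iid. exact G2.
Qed.

Lemma ubar_eq j Is : length Is = N -> (forall I, In I Is -> length I = B) ->
  avg N (map (uvec B g x xt) Is) j - mu j = / (INR N * INR B) * sumL (sumL (Xj j)) Is.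
Proof.
  intros L1 L2. unfold avg. rewrite fold_map_sumL.
  rewrite (sumL_ext _ (fun I => / INR B * sumL (Xj j) I + mu j)).
  - rewrite sumL_plus, sumL_scal, sumL_const, L1. field. split; [apply INRB|apply INRN].
  - intros I HI. unfold uvec.
    change (fold_right (fun a acc => g a x j - g a xt j + acc) 0 I) with (sumL (fun a => ee a j) I).
    rewrite (sumL_ext _ (fun a => Xj j a + mu j)) by (intros; unfold Xj; ring).
    rewrite sumL_plus, sumL_const, L2 by auto. field. apply INRB.
Qed.

Lemma sw_ubar j : expect (sample_workers N B n)
   (fun Is => (avg N (map (uvec B g x xt) Is) j - mu j) ^ 2) = / (INR N * INR B) * Vj j.
Proof.
  destruct sw_basic as [M NN].
  rewrite (expect_ext_pos _ _ (fun Is => (/ (INR N * INR B)) ^ 2 * sumL (sumL (Xj j)) Is ^ 2)); auto.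
  - rewrite expect_scal, sw_var. field. split; [apply INRB|apply INRN].
  - intros p Is Hin Hp. destruct (sw_supp p Is Hin Hp) as [L1 L2].
    rewrite ubar_eq; auto. ring. intros; apply L2; auto.
Qed.

Lemma gradf_diff j : gradf n g x j - gradf n g xt j = mu j.
Proof. unfold gradf, mu, ee. rewrite <- Rmult_minus_distr_l.
  f_equal. rewrite (sumR_ext n (fun a => g a x j - g a xt j) (fun a => g a x j + (-1) * g a xt j)) by (intros; ring).
  rewrite sumR_plus, sumR_scal. ring. Qed.

Variable K : R.
Hypothesis HK : forall a, (a < n)%nat -> sqnorm d (vsub (g a x) (g a xt)) <= K.

Lemma Vj_sum : sumR d Vj <= K.
Proof.
  apply Rle_trans with (sumR d (fun j => / INR n * sumR n (fun a => ee a j ^ 2))).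
  - apply sumR_le. intros j _. unfold Vj. apply Rmult_le_compat_l.
    + left; apply Rinv_0_lt_compat, lt_0_INR; auto.
    + unfold Xj. rewrite (sumR_ext n _ (fun a => ee a j ^ 2 + ((-2 * mu j) * ee a j + mu j ^ 2)))
        by (intros; ring).
      rewrite !sumR_plus, sumR_scal, sumR_const.
      assert (sumR n (fun a => ee a j) = INR n * mu j) by (unfold mu; field; apply INRn).
      rewrite H. assert (0 <= INR n * mu j ^ 2) by (apply Rmult_le_pos; [apply pos_INR|apply pow2_ge_0]).
      nra.
  - rewrite sumR_scal, sumR_swap.
    apply Rle_trans with (/ INR n * sumR n (fun _ => K)).
    + apply Rmult_le_compat_l; [left; apply Rinv_0_lt_compat, lt_0_INR; auto|].
      apply sumR_le. intros a Ha. apply Rle_trans with (2 := HK a Ha). right. reflexivity.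
    + rewrite sumR_const. right. field. apply INRn.
Qed.

Lemma u_bound I : length I = B -> (forall a, In a I -> (a < n)%nat) ->
  sqnorm d (uvec B g x xt I) <= K.
Proof.
  intros L1 L2. unfold sqnorm.
  apply Rle_trans with (sumR d (fun j => / INR B * sumL (fun a => ee a j ^ 2) I)).
  - apply sumR_le. intros j _. unfold uvec.
    change (fold_right (fun a acc => g a x j - g a xt j + acc) 0 I) with (sumL (fun a => ee a j) I).
    pose proof (cauchy (fun a => ee a j) I) as C. rewrite L1 in C.
    assert (HBp : 0 < INR B) by (apply lt_0_INR; auto).
    replace ((/ INR B * sumL (fun a => ee a j) I) ^ 2) with (/ INR B * (/ INR B * (sumL (fun a => ee a j) I) ^ 2))
      by (field; apply INRB).
    apply Rmult_le_compat_l; [left; apply Rinv_0_lt_compat; auto|].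
    apply (Rmult_le_reg_l (INR B)); auto. rewrite <- Rmult_assoc, Rinv_r, Rmult_1_l by apply INRB. auto.
  - rewrite sumR_scal, sumR_sumL.
    apply Rle_trans with (/ INR B * sumL (fun _ => K) I).
    + apply Rmult_le_compat_l; [left; apply Rinv_0_lt_compat, lt_0_INR; auto|].
      apply sumL_le. intros a Ha. apply Rle_trans with (2 := HK a (L2 a Ha)). right. reflexivity.
    + rewrite sumL_const, L1. right. field. apply INRB.
Qed.
End Samp.

Lemma infnorm_nonneg d u : 0 <= infnorm d u.
Proof. induction d; simpl; [lra|]. apply Rle_trans with (1 := IHd), Rmax_l. Qed.

Lemma infnorm_ge d u j : (j < d)%nat -> Rabs (u j) <= infnorm d u.
Proof.
  induction d; intros Hj; [lia|]. simpl.
  destruct (Nat.eq_dec j d) as [->|H]; [apply Rmax_r|].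
  apply Rle_trans with (2 := Rmax_l _ _). apply IHd; lia.
Qed.

Lemma infnorm_sq d u : infnorm d u ^ 2 <= sqnorm d u.
Proof.
  induction d; unfold sqnorm in *; simpl; [lra|].
  pose proof (infnorm_nonneg d u). pose proof (Rabs_pos (u d)).
  assert (Rabs (u d) ^ 2 = u d ^ 2) by (unfold Rabs; destruct (Rcase_abs (u d)); ring).
  unfold Rmax; destruct (Rle_dec _ _).
  - pose proof (pow2_ge_0 (infnorm d u)). simpl in *. nra.
  - pose proof (pow2_ge_0 (u d)). simpl in *. nra.
Qed.

Lemma count_out_sum dl b u k : INR (count_out dl b u k) = sumR k (fun j => oind dl b (u j)).
Proof.
  induction k; simpl count_out; simpl sumR; [reflexivity|].
  rewrite plus_INR, IHk. f_equal. unfold oind.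
  destruct (Rlt_dec _ _); [reflexivity|]. destruct (Rlt_dec _ _); reflexivity.
Qed.

Lemma length_combine_eq {A C} (l1 : list A) (l2 : list C) : length l1 = length l2 ->
  length (combine l1 l2) = length l1.
Proof. intros H. rewrite length_combine, H, Nat.min_id. auto. Qed.

Section Quant.
Variables (b d N : nat) (lam dlam K : R).
Hypotheses (Hb : (2 <= b)%nat) (Hl : 0 < lam <= 1) (HN : (0 < N)%nat) (HK : 0 <= K).

Definition cc := 2 ^ (b - 1) - 1.
Lemma cc_ge1 : 1 <= cc.
Proof. unfold cc. replace (b - 1)%nat with (S (b - 2)) by lia. simpl.
  pose proof (pow_R1_Rle 2 (b - 2) ltac:(lra)). lra. Qed.
Definition Dl := lam * sqrt K / cc.
Lemma Dl_sq : Dl ^ 2 = lam ^ 2 * K / cc ^ 2.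
Proof. unfold Dl. pose proof cc_ge1. unfold Rdiv. rewrite !Rpow_mult_distr, pow2_sqrt by auto. rewrite pow_inv. ring. Qed.

Definition Pgood (dl : R) (u : vec) : Prop :=
  0 <= dl /\ lam * infnorm d u <= cc * dl /\ dl <= Dl /\ sqnorm d u <= K /\
  INR (count_out dl b u d) <= dlam.

Lemma pair_mom j dl u : (j < d)%nat -> Pgood dl u ->
  beta b d j dl u ^ 2 <= oind dl b (u j) * (1 - lam) ^ 2 * K /\
  sec b d j dl u - beta b d j dl u ^ 2 <= Dl ^ 2 / 4.
Proof.
  intros Hj (H1 & H2 & H3 & H4 & H5).
  unfold beta, sec, Qvec.
  rewrite (Qvec_marg dl b u d j (fun y => y - u j)) by auto.
  rewrite (Qvec_marg dl b u d j (fun y => (y - u j) ^ 2)) by auto.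
  destruct (Qsc_mom dl b (u j) lam (infnorm d u) H1 Hb Hl H2 (infnorm_ge d u j Hj)) as [G1 G2].
  pose proof (infnorm_sq d u). pose proof (infnorm_nonneg d u).
  assert (Ho : 0 <= oind dl b (u j)) by (destruct (oind_01 dl b (u j)) as [-> | ->]; lra).
  split.
  - apply Rle_trans with (1 := G1). apply Rmult_le_compat_l; [|lra].
    apply Rmult_le_pos; auto. apply pow2_ge_0.
  - apply Rle_trans with (1 := G2). assert (0 <= Dl ^ 2 - dl ^ 2) by nra. lra.
Qed.

Lemma quant_var j ds us : (j < d)%nat -> length ds = N -> length us = N ->
  (forall dl u, In (dl, u) (combine ds us) -> Pgood dl u) ->
  (forall dl, In dl ds -> 0 <= dl) ->
  expect (Qlist b d ds us) (fun qs => (fq j qs - fq j us) ^ 2)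
   <= INR N * (Dl ^ 2 / 4) + INR N * ((1 - lam) ^ 2 * K * sumb (fun dl u => oind dl b (u j)) ds us).
Proof.
  intros Hj L1 L2 HP Hd.
  destruct (Qlist_mom b d j ds us Hd ltac:(lia)) as (_ & _ & _ & E2). rewrite E2.
  assert (LC : length (combine ds us) = N) by (rewrite length_combine_eq; lia).
  apply Rplus_le_compat.
  - unfold sumb. apply Rle_trans with (sumL (fun _ => Dl ^ 2 / 4) (combine ds us)).
    + apply sumL_le. intros [dl u] Hin. apply (pair_mom j dl u Hj (HP dl u Hin)).
    + rewrite sumL_const, LC. lra.
  - unfold sumb. apply Rle_trans with (1 := cauchy _ _). rewrite LC.
    apply Rmult_le_compat_l; [apply pos_INR|].
    rewrite <- sumL_scal. apply sumL_le. intros [dl u] Hin. simpl.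
    destruct (pair_mom j dl u Hj (HP dl u Hin)). lra.
Qed.

Lemma count_total ds us : length ds = N -> length us = N ->
  (forall dl u, In (dl, u) (combine ds us) -> Pgood dl u) ->
  sumR d (fun j => sumb (fun dl u => oind dl b (u j)) ds us) <= INR N * dlam.
Proof.
  intros L1 L2 HP. unfold sumb. rewrite sumR_sumL.
  assert (LC : length (combine ds us) = N) by (rewrite length_combine_eq; lia).
  rewrite <- LC, <- sumL_const. apply sumL_le. intros [dl u] Hin. simpl.
  rewrite <- count_out_sum. apply (HP dl u Hin).
Qed.
End Quant.

Lemma sq2 a m c : (a - c) ^ 2 <= 2 * (a - m) ^ 2 + 2 * (m - c) ^ 2.
Proof. assert (0 <= (a - 2 * m + c) ^ 2) by apply pow2_ge_0. nra. Qed.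

Lemma expect_sqnorm {A} (m : Defs.dist A) d (F : A -> vec) :
  expect m (fun a => sqnorm d (F a)) = sumR d (fun j => expect m (fun a => F a j ^ 2)).
Proof. unfold sqnorm. apply (expect_sumR m d (fun j a => F a j ^ 2)). Qed.

Section QB.
Variables (b d N : nat) (lam dlam K : R).
Hypotheses (Hb : (2 <= b)%nat) (Hl : 0 < lam <= 1) (HN : (0 < N)%nat) (HK : 0 <= K) (Hdlam : 0 <= dlam).
Variables (G0 G1 : vec).

Lemma INRN' : 0 < INR N. Proof. apply lt_0_INR; lia. Qed.

Lemma quant_ab ds us : length ds = N -> length us = N ->
  (forall dl u, In (dl, u) (combine ds us) -> Pgood b d lam dlam K dl u) ->
  (forall dl, In dl ds -> 0 <= dl) ->
  expect (Qlist b d ds us) (fun qs => sqnorm d (vsub (vadd (avg N qs) G0) G1))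
  <= 2 * (INR d * (Dl b lam K ^ 2 / 4) + dlam * (1 - lam) ^ 2 * K)
     + 2 * sumR d (fun j => (avg N us j - (G1 j - G0 j)) ^ 2).
Proof.
  intros L1 L2 HP Hd.
  destruct (Qlist_basic b d ds us Hd) as [M NN].
  pose proof INRN'.
  rewrite expect_sqnorm.
  set (S j := sumb (fun dl u => oind dl b (u j)) ds us).
  apply Rle_trans with (sumR d (fun j => 2 * (/ INR N * (Dl b lam K ^ 2 / 4 + (1 - lam) ^ 2 * K * S j))
                                          + 2 * (avg N us j - (G1 j - G0 j)) ^ 2)).
  - apply sumR_le. intros j Hj.
    apply Rle_trans with (expect (Qlist b d ds us)
       (fun qs => 2 * ((/ INR N) ^ 2 * (fq j qs - fq j us) ^ 2) + 2 * (avg N us j - (G1 j - G0 j)) ^ 2)).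
    + apply expect_le_pos; auto. intros p qs _ _.
      unfold vsub, vadd.
      replace (avg N qs j + G0 j - G1 j) with (avg N qs j - (G1 j - G0 j)) by ring.
      replace ((/ INR N) ^ 2 * (fq j qs - fq j us) ^ 2) with ((avg N qs j - avg N us j) ^ 2)
        by (unfold avg, fq; ring).
      apply sq2.
    + rewrite expect_plus, expect_scal, expect_scal, expect_const, M.
      pose proof (quant_var b d N lam dlam K Hb Hl HN j ds us Hj L1 L2 HP Hd) as Q.
      fold (S j) in Q.
      assert ((/ INR N) ^ 2 * expect (Qlist b d ds us) (fun qs => (fq j qs - fq j us) ^ 2)
              <= / INR N * (Dl b lam K ^ 2 / 4 + (1 - lam) ^ 2 * K * S j)).
      { apply Rle_trans with ((/ INR N) ^ 2 * (INR N * (Dl b lam K ^ 2 / 4) +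
            INR N * ((1 - lam) ^ 2 * K * S j))).
        - apply Rmult_le_compat_l; [apply pow2_ge_0|exact Q].
        - right. field. lra. }
      lra.
  - rewrite sumR_plus, !sumR_scal.
    rewrite sumR_plus, sumR_const, sumR_scal, Rmult_plus_distr_l.
    pose proof (count_total b d N lam dlam K Hb HN ds us L1 L2 HP) as C. fold S in C.
    assert (0 <= Dl b lam K ^ 2 / 4) by (pose proof (pow2_ge_0 (Dl b lam K)); lra).
    assert (/ INR N * (INR d * (Dl b lam K ^ 2 / 4)) <= INR d * (Dl b lam K ^ 2 / 4)).
    { assert (0 <= INR d * (Dl b lam K ^ 2 / 4)) by (apply Rmult_le_pos; auto; apply pos_INR).
      assert (1 <= INR N) by (apply (le_INR 1); lia).
      rewrite <- (Rmult_1_l (INR d * _)) at 2. apply Rmult_le_compat_r; auto.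
      rewrite <- Rinv_1. apply Rinv_le_contravar; lra. }
    assert (/ INR N * ((1 - lam) ^ 2 * K * sumR d S) <= dlam * (1 - lam) ^ 2 * K).
    { assert (0 <= (1 - lam) ^ 2 * K) by (apply Rmult_le_pos; [apply pow2_ge_0|auto]).
      apply Rle_trans with (/ INR N * ((1 - lam) ^ 2 * K * (INR N * dlam))).
      - apply Rmult_le_compat_l; [left; apply Rinv_0_lt_compat; auto|]. apply Rmult_le_compat_l; auto.
      - right. field. lra. }
    lra.
Qed.
End QB.

Lemma In_combine_const {A C} (c : A) (l : list C) x y :
  In (x, y) (combine (map (fun _ => c) l) l) -> x = c.
Proof. intros H. apply in_combine_l in H. apply in_map_iff in H as [? [? _]]. auto. Qed.

Lemma sumL_bounds {A} (F : A -> R) l lo hi : (forall a, In a l -> lo <= F a <= hi) ->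
  INR (length l) * lo <= sumL F l <= INR (length l) * hi.
Proof. intros H. rewrite <- !sumL_const. split; apply sumL_le; intros a Ha; apply H; auto. Qed.

Section QC.
Variables (b d N : nat) (lam dlam K : R).
Hypotheses (Hb : (2 <= b)%nat) (Hl : 0 < lam <= 1) (HN : (0 < N)%nat) (HK : 0 <= K) (Hdlam : 0 <= dlam).
Variables (G0 G1 : vec).

Definition rho := if Nat.eq_dec N 1 then 0 else Dl b lam K ^ 2 / 4.

Lemma quant_c us dt : length us = N -> 0 <= dt <= Dl b lam K ->
  (forall dl u, In (dl, u) (combine (map (fun _ => dt) us) us) -> Pgood b d lam dlam K dl u) ->
  expect (Qlist b d (map (fun _ => dt) us) us)
    (fun qs => expect (Qvec dt b d (avg N qs)) (fun w => sqnorm d (vsub (vadd w G0) G1)))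
  <= 2 * (INR d * (3 * Dl b lam K ^ 2 / 8) + dlam * (1 - lam) ^ 2 * K)
     + 2 * sumR d (fun j => (avg N us j - (G1 j - G0 j)) ^ 2).
Proof.
  intros L2 Hdt HP.
  set (ds := map (fun _ => dt) us) in *.
  assert (L1 : length ds = N) by (unfold ds; rewrite length_map; auto).
  assert (Hd : forall dl, In dl ds -> 0 <= dl).
  { intros dl Hin. unfold ds in Hin. apply in_map_iff in Hin as [? [<- _]]. lra. }
  destruct (Qlist_basic b d ds us Hd) as [M NN].
  assert (0 < INR N) by (apply lt_0_INR; lia).
  assert (Hrho : 0 <= rho /\ rho + Dl b lam K ^ 2 / 4 / INR N <= 3 * Dl b lam K ^ 2 / 8).
  { unfold rho. pose proof (pow2_ge_0 (Dl b lam K)).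
    destruct (Nat.eq_dec N 1) as [->|HN1]; simpl; [lra|].
    assert (2 <= INR N) by (apply (le_INR 2); lia).
    split; [lra|]. assert (Dl b lam K ^ 2 / 4 / INR N <= Dl b lam K ^ 2 / 8); [|lra].
    unfold Rdiv. rewrite Rmult_assoc. apply Rmult_le_compat_l; auto.
    apply Rle_trans with (/ 4 * / 2); [|lra]. apply Rmult_le_compat_l; [lra|].
    apply Rinv_le_contravar; lra. }
  assert (Supp : forall p qs, In (p, qs) (Qlist b d ds us) -> 0 < p -> forall j, (j < d)%nat ->
    let w := avg N qs j in
    qlo dt b <= w <= qhi dt b /\ (N = 1%nat -> grid dt w)).
  { intros p qs Hin Hp j Hj.
    destruct (Qlist_supp b d ds us Hd p qs Hin Hp) as [LQ SQ].
    rewrite L1, L2, Nat.min_id in LQ.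
    assert (Hq : forall q, In q qs -> qlo dt b <= q j <= qhi dt b /\ grid dt (q j)).
    { intros q Hq. destruct (SQ q Hq) as (dl & u & p' & C1 & C2 & C3).
      apply In_combine_const in C1. subst dl.
      destruct (Qvec_supp dt b u d (proj1 Hdt) p' q C2 C3 j Hj) as (p'' & D1 & D2).
      apply (Qsc_supp dt b (u j) (proj1 Hdt) Hb p'' (q j) D1 D2). }
    cbv zeta. unfold avg.
    change (fold_right (fun v acc => v j + acc) 0 qs) with (sumL (fun q => q j) qs).
    split.
    - destruct (sumL_bounds (fun q => q j) qs (qlo dt b) (qhi dt b)) as [B1 B2].
      { intros q Hq'; apply Hq; auto. }
      change (length (A:=nat->R) qs) with (length (A:=vec) qs) in B1, B2. rewrite LQ in B1, B2. split.
      + apply (Rmult_le_reg_l (INR N)); auto. rewrite <- Rmult_assoc, Rinv_r, Rmult_1_l; lra.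
      + apply (Rmult_le_reg_l (INR N)); auto. rewrite <- Rmult_assoc, Rinv_r, Rmult_1_l; lra.
    - intros HN1. destruct qs as [|q [|q' qs']]; simpl in LQ; try lia.
      rewrite HN1. simpl sumL. replace (/ INR 1 * (q j + 0)) with (q j) by (simpl; field). apply Hq; left; auto. }
  rewrite (expect_ext_pos _ _ (fun qs => sumR d (fun j => expect (Qvec dt b d (avg N qs))
                                     (fun w => (vadd w G0 j - G1 j) ^ 2)))); auto.
  2:{ intros; apply expect_sqnorm. }
  rewrite expect_sumR.
  set (S j := sumb (fun dl u => oind dl b (u j)) ds us).
  apply Rle_trans with (sumR d (fun j => 2 * rho + 2 * (/ INR N * (Dl b lam K ^ 2 / 4 + (1 - lam) ^ 2 * K * S j))
                                          + 2 * (avg N us j - (G1 j - G0 j)) ^ 2)).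
  - apply sumR_le. intros j Hj.
    set (ub := avg N us j). set (r := (ub - (G1 j - G0 j)) ^ 2).
    apply Rle_trans with (expect (Qlist b d ds us)
       (fun qs => 2 * rho + 2 * ((/ INR N) ^ 2 * (fq j qs - fq j us) ^ 2) + 2 * r)).
    + apply expect_le_pos; auto. intros p qs Hin Hp.
      destruct (Supp p qs Hin Hp j Hj) as [Rg Gr].
      set (w := avg N qs j) in *.
      destruct (Qvec_basic dt b (avg N qs) d (proj1 Hdt)) as [VM VN].
      destruct (Qsc_in dt b w (proj1 Hdt) Hb Rg) as (Q1 & Q2 & Q3).
      apply Rle_trans with (expect (Qvec dt b d (avg N qs)) (fun Q => 2 * (Q j - ub) ^ 2 + 2 * r)).
      * apply expect_le_pos; auto. intros p' Q _ _. unfold vadd, r.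
        replace (Q j + G0 j - G1 j) with (Q j - (G1 j - G0 j)) by ring. apply sq2.
      * rewrite expect_plus, expect_scal, expect_const.
        assert (VM' : mass (A:=vec) (Qvec dt b d (avg N qs)) = 1) by exact VM.
        rewrite VM'. unfold Qvec.
        rewrite (Qvec_marg dt b (avg N qs) d j (fun y => (y - ub) ^ 2)) by (auto; lra).
        fold w.
        rewrite (expect_ext_in _ _ (fun y => ((w - ub) + (y - w)) ^ 2)) by (intros; f_equal; ring).
        rewrite expect_quad, Q1.
        destruct (Qsc_basic dt b w (proj1 Hdt)) as [SM _]. rewrite SM.
        assert (E3 : expect (Qsc dt b w) (fun y => (y - w) ^ 2) <= rho).
        { unfold rho. destruct (Nat.eq_dec N 1) as [HN1|HN1].
          - rewrite Q3; auto. lra.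
          - apply Rle_trans with (1 := Q2). destruct Hdt.
            assert (dt ^ 2 <= Dl b lam K ^ 2) by nra. lra. }
        assert ((w - ub) ^ 2 = (/ INR N) ^ 2 * (fq j qs - fq j us) ^ 2).
        { unfold w, ub, avg, fq. ring. }
        lra.
    + rewrite !expect_plus, !expect_scal, !expect_const, M.
      pose proof (quant_var b d N lam dlam K Hb Hl HN j ds us Hj L1 L2 HP Hd) as Q.
      fold (S j) in Q.
      assert ((/ INR N) ^ 2 * expect (Qlist b d ds us) (fun qs => (fq j qs - fq j us) ^ 2)
              <= / INR N * (Dl b lam K ^ 2 / 4 + (1 - lam) ^ 2 * K * S j)).
      { apply Rle_trans with ((/ INR N) ^ 2 * (INR N * (Dl b lam K ^ 2 / 4) +
            INR N * ((1 - lam) ^ 2 * K * S j))).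
        - apply Rmult_le_compat_l; [apply pow2_ge_0|exact Q].
        - right. field. lra. }
      lra.
  - rewrite !sumR_plus, !sumR_scal, sumR_const.
    rewrite sumR_plus, sumR_const, sumR_scal.
    pose proof (count_total b d N lam dlam K Hb HN ds us L1 L2 HP) as C. fold S in C.
    assert (/ INR N * ((1 - lam) ^ 2 * K * sumR d S) <= dlam * (1 - lam) ^ 2 * K).
    { assert (0 <= (1 - lam) ^ 2 * K) by (apply Rmult_le_pos; [apply pow2_ge_0|auto]).
      apply Rle_trans with (/ INR N * ((1 - lam) ^ 2 * K * (INR N * dlam))).
      - apply Rmult_le_compat_l; [left; apply Rinv_0_lt_compat; auto|]. apply Rmult_le_compat_l; auto.
      - right. field. lra. }
    assert (2 * (INR d * rho) + 2 * (/ INR N * (INR d * (Dl b lam K ^ 2 / 4)))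
            <= 2 * (INR d * (3 * Dl b lam K ^ 2 / 8))).
    { replace (2 * (INR d * rho) + 2 * (/ INR N * (INR d * (Dl b lam K ^ 2 / 4))))
        with (2 * INR d * (rho + Dl b lam K ^ 2 / 4 / INR N)) by (field; lra).
      pose proof (pos_INR d). destruct Hrho. nra. }
    rewrite Rmult_plus_distr_l. lra.
Qed.
End QC.

Lemma expect_bind_ret {A C} (m : Defs.dist A) (f : A -> C) F :
  expect (dbind m (fun a => dret (f a))) F = expect m (fun a => F (f a)).
Proof. rewrite expect_bind. apply expect_ext_in. intros; apply expect_ret. Qed.

Lemma In_combine_map {A C} (f : C -> A) (l : list C) x y :
  In (x, y) (combine (map f l) l) -> x = f y.
Proof. induction l; simpl; [tauto|]. intros [E|H]; [inversion E; auto|auto]. Qed.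

Lemma In_combine_nth {A C} (l : list A) (l' : list C) x y d1 d2 :
  length l = length l' -> In (x, y) (combine l l') ->
  exists i, (i < length l)%nat /\ nth i l d1 = x /\ nth i l' d2 = y.
Proof.
  intros L H. apply (In_nth _ _ (d1, d2)) in H as [i [Hi E]].
  rewrite combine_nth in E by auto. inversion E.
  exists i. rewrite length_combine, L, Nat.min_id in Hi. rewrite L. auto.
Qed.

Lemma fold_Rmax_ge l a : In a l -> a <= fold_right Rmax 0 l.
Proof. induction l; simpl; [tauto|]. intros [->|H]; [apply Rmax_l|].
  apply Rle_trans with (2 := Rmax_r _ _); auto. Qed.
Lemma fold_Rmax_nonneg l : 0 <= fold_right Rmax 0 l.
Proof. induction l; simpl; [lra|]. apply Rle_trans with (2 := Rmax_r _ _); auto. Qed.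
Lemma fold_Rmax_le l c : 0 <= c -> (forall a, In a l -> a <= c) -> fold_right Rmax 0 l <= c.
Proof. intros Hc. induction l; simpl; intros H; auto.
  apply Rmax_lub; [apply H; auto|apply IHl; intros; apply H; auto]. Qed.

Section Step.
Variables (n N B b d : nat) (lam dlam K : R) (g : nat -> vec -> vec) (x xt : vec).
Hypotheses (Hn : (0 < n)%nat) (HN : (0 < N)%nat) (HB : (0 < B)%nat) (Hb : (2 <= b)%nat)
  (Hl : 0 < lam <= 1) (Hdlam : 0 <= dlam) (HK0 : 0 <= K)
  (HK : forall a, (a < n)%nat -> sqnorm d (vsub (g a x) (g a xt)) <= K).

Lemma sw_finish Q (cont : list (list nat) -> R) :
  (forall p Is, In (p, Is) (sample_workers N B n) -> 0 < p ->
     cont Is <= 2 * Q + 2 * sumR d (fun j => (avg N (map (uvec B g x xt) Is) j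
                                      - (gradf n g x j - gradf n g xt j)) ^ 2)) ->
  expect (sample_workers N B n) cont <= 2 * Q + 2 * (/ (INR N * INR B)) * K.
Proof.
  intros H. destruct (sw_basic n N B Hn) as [M NN].
  eapply Rle_trans; [apply expect_le_pos; [exact NN|exact H]|].
  rewrite expect_plus, expect_const, M, expect_scal.
  rewrite (expect_sumR _ d (fun j Is => (avg N (map (uvec B g x xt) Is) j
                                      - (gradf n g x j - gradf n g xt j)) ^ 2)).
  rewrite (sumR_ext d _ (fun j => / (INR N * INR B) * Vj n g x xt j)).
  - rewrite sumR_scal. pose proof (Vj_sum n N B d g x xt Hn HN HB K HK).
    assert (0 < / (INR N * INR B)).
    { apply Rinv_0_lt_compat, Rmult_lt_0_compat; apply lt_0_INR; auto. }
    assert (/ (INR N * INR B) * sumR d (Vj n g x xt) <= / (INR N * INR B) * K)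
      by (apply Rmult_le_compat_l; lra). lra.
  - intros j _. rewrite <- (sw_ubar n N B g x xt Hn HN HB j).
    apply expect_ext_in. intros. rewrite gradf_diff. reflexivity.
Qed.

Definition Pstep (o : StepOut) : Prop := forall i, (i < N)%nat ->
  INR (count_out (nth i (so_ds o) 0) b (nth i (so_us o) vzero) d) <= dlam.

Lemma count_extract ds us o : so_ds o = ds -> so_us o = us -> length ds = N -> length us = N ->
  Pstep o -> forall dl u, In (dl, u) (combine ds us) -> INR (count_out dl b u d) <= dlam.
Proof.
  intros E1 E2 L1 L2 P dl u Hin.
  destruct (In_combine_nth ds us dl u 0 vzero ltac:(lia) Hin) as (i & Hi & F1 & F2).
  specialize (P i ltac:(lia)). rewrite E1, E2, F1, F2 in P. auto.
Qed.

Lemma us_good Is p : In (p, Is) (sample_workers N B n) -> 0 < p ->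
  forall u, In u (map (uvec B g x xt) Is) -> sqnorm d u <= K.
Proof.
  intros Hin Hp u Hu. destruct (sw_supp n N B Hn p Is Hin Hp) as [L1 L2].
  apply in_map_iff in Hu as [I [<- HI]]. destruct (L2 I HI).
  apply (u_bound n N B d g x xt Hn HN HB K HK); auto.
Qed.

Lemma scale_good u : sqnorm d u <= K ->
  0 <= scale b lam d u /\ lam * infnorm d u <= cc b * scale b lam d u /\ scale b lam d u <= Dl b lam K.
Proof.
  intros Hu. pose proof (cc_ge1 b N Hb HN). pose proof (infnorm_nonneg d u).
  pose proof (infnorm_sq d u).
  assert (Hi : infnorm d u <= sqrt K).
  { rewrite <- (sqrt_pow2 (infnorm d u)) by auto. apply sqrt_le_1_alt. lra. }
  unfold scale, Dl. fold (cc b). split; [|split].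
  - unfold Rdiv. apply Rmult_le_pos; [nra|]. left; apply Rinv_0_lt_compat; lra.
  - right. field. lra.
  - unfold Rdiv. apply Rmult_le_compat_r; [left; apply Rinv_0_lt_compat; lra|]. nra.
Qed.
End Step.

Section Step2.
Variables (n N B b d : nat) (lam dlam K : R) (g : nat -> vec -> vec) (x xt : vec).
Hypotheses (Hn : (0 < n)%nat) (HN : (0 < N)%nat) (HB : (0 < B)%nat) (Hb : (2 <= b)%nat)
  (Hl : 0 < lam <= 1) (Hdlam : 0 <= dlam) (HK0 : 0 <= K)
  (HK : forall a, (a < n)%nat -> sqnorm d (vsub (g a x) (g a xt)) <= K).

Lemma Dl_nonneg : 0 <= Dl b lam K.
Proof. unfold Dl. pose proof (cc_ge1 b N Hb HN). pose proof (sqrt_pos K).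
  unfold Rdiv. apply Rmult_le_pos; [nra|]. left; apply Rinv_0_lt_compat; lra. Qed.

Lemma pgood_A Is p : In (p, Is) (sample_workers N B n) -> 0 < p ->
  let us := map (uvec B g x xt) Is in let dis := map (scale b lam d) us in
  (forall dl u, In (dl, u) (combine dis us) -> INR (count_out dl b u d) <= dlam) ->
  forall dl u, In (dl, u) (combine dis us) -> Pgood b d lam dlam K dl u.
Proof.
  intros Hin Hp us dis Hc dl u Hdu.
  assert (Hu : sqnorm d u <= K).
  { apply in_combine_r in Hdu. eapply (us_good n N B d K g x xt Hn HN HB HK); eauto. }
  destruct (scale_good N b d lam K HN Hb Hl u Hu) as (S1 & S2 & S3).
  pose proof (In_combine_map _ _ _ _ Hdu) as ->.
  unfold Pgood. repeat split; auto.
Qed.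

Lemma pgood_B Is p : In (p, Is) (sample_workers N B n) -> 0 < p ->
  let us := map (uvec B g x xt) Is in let dis := map (scale b lam d) us in
  let dt := fold_right Rmax 0 dis in
  (forall dl u, In (dl, u) (combine (map (fun _ => dt) us) us) -> INR (count_out dl b u d) <= dlam) ->
  (0 <= dt <= Dl b lam K) /\
  forall dl u, In (dl, u) (combine (map (fun _ => dt) us) us) -> Pgood b d lam dlam K dl u.
Proof.
  intros Hin Hp us dis dt Hc.
  assert (Hus : forall u, In u us -> sqnorm d u <= K)
    by (intros; eapply (us_good n N B d K g x xt Hn HN HB HK); eauto).
  assert (Hdt : 0 <= dt <= Dl b lam K).
  { split; [apply fold_Rmax_nonneg|]. apply fold_Rmax_le; [apply Dl_nonneg|].
    intros a Ha. unfold dis in Ha. apply in_map_iff in Ha as [u [<- Hu]].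
    apply (scale_good N b d lam K HN Hb Hl u (Hus u Hu)). }
  split; auto.
  intros dl u Hdu.
  assert (Hu : In u us) by (apply in_combine_r in Hdu; auto).
  destruct (scale_good N b d lam K HN Hb Hl u (Hus u Hu)) as (S1 & S2 & S3).
  pose proof (In_combine_const _ _ _ _ Hdu) as ->.
  assert (scale b lam d u <= dt) by (apply fold_Rmax_ge; unfold dis; apply in_map; auto).
  pose proof (cc_ge1 b N Hb HN).
  unfold Pgood. repeat split; try lra.
  - nra.
  - apply Hus; auto.
  - apply Hc. auto.
Qed.
End Step2.

Section Step3.
Variables (n N B b d : nat) (lam dlam K : R) (g : nat -> vec -> vec) (x xt : vec).
Hypotheses (Hn : (0 < n)%nat) (HN : (0 < N)%nat) (HB : (0 < B)%nat) (Hb : (2 <= b)%nat)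
  (Hl : 0 < lam <= 1) (Hdlam : 0 <= dlam) (HK0 : 0 <= K)
  (HK : forall a, (a < n)%nat -> sqnorm d (vsub (g a x) (g a xt)) <= K).

Lemma us_facts Is p : In (p, Is) (sample_workers N B n) -> 0 < p ->
  length (map (uvec B g x xt) Is) = N /\
  length (map (scale b lam d) (map (uvec B g x xt) Is)) = N /\
  (forall dl, In dl (map (scale b lam d) (map (uvec B g x xt) Is)) -> 0 <= dl).
Proof.
  intros Hin Hp. destruct (sw_supp n N B Hn p Is Hin Hp) as [LI _].
  rewrite !length_map. repeat split; auto.
  intros dl Hdl. apply in_map_iff in Hdl as [u [<- Hu]].
  apply (scale_good N b d lam K HN Hb Hl u).
  eapply (us_good n N B d K g x xt Hn HN HB HK); eauto.
Qed.

Lemma step_A : (forall r o, In (r, o) (step SchA n N B b d lam g x xt) -> 0 < r -> Pstep N b d dlam o) ->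
  expect (step SchA n N B b d lam g x xt) (fun o => sqnorm d (vsub (so_v o) (gradf n g x)))
  <= 2 * (INR d * (Dl b lam K ^ 2 / 4) + dlam * (1 - lam) ^ 2 * K) + 2 * / (INR N * INR B) * K.
Proof.
  intros AS. unfold step at 1. rewrite expect_bind.
  apply (sw_finish n N B d K g x xt Hn HN HB HK). intros p Is Hin Hp.
  cbv beta zeta iota.
  destruct (us_facts Is p Hin Hp) as (Lus & Ldis & Hd).
  set (us := map (uvec B g x xt) Is) in *. set (dis := map (scale b lam d) us) in *.
  destruct (Qlist_basic b d dis us Hd) as [M NN].
  assert (Hc : forall dl u, In (dl, u) (combine dis us) -> INR (count_out dl b u d) <= dlam).
  { set (cont := dbind (Qlist b d dis us)
                   (fun qs => dret (mkStepOut us dis (vadd (avg N qs) (gradf n g xt))))).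
    assert (mass cont = 1) by (unfold cont; rewrite mass_bind; auto; intros; apply mass_ret).
    assert (nonneg cont) by (apply nonneg_bind; auto; intros; apply nonneg_ret).
    destruct (exists_pos cont) as (r2 & o & Hr2 & Hr2p); auto.
    assert (Ho : so_ds o = dis /\ so_us o = us).
    { apply In_bind_elim in Hr2 as (q & qs & r & _ & [E|[]] & _). inversion E; subst; auto. }
    destruct Ho as [Ho1 Ho2].
    apply (count_extract n N B b d dlam Hn HN HB Hb dis us o); auto.
    apply (AS (p * r2)); [|apply Rmult_lt_0_compat; auto].
    unfold step. eapply In_bind_intro; [exact Hin|exact Hr2]. }
  rewrite expect_bind_ret. cbn [so_v].
  apply (quant_ab b d N lam dlam K Hb Hl HN HK0 (gradf n g xt) (gradf n g x) dis us); auto.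
  exact (pgood_A n N B b d lam dlam K g x xt Hn HN HB Hb Hl HK Is p Hin Hp Hc).
Qed.

Lemma step_B : (forall r o, In (r, o) (step SchB n N B b d lam g x xt) -> 0 < r -> Pstep N b d dlam o) ->
  expect (step SchB n N B b d lam g x xt) (fun o => sqnorm d (vsub (so_v o) (gradf n g x)))
  <= 2 * (INR d * (Dl b lam K ^ 2 / 4) + dlam * (1 - lam) ^ 2 * K) + 2 * / (INR N * INR B) * K.
Proof.
  intros AS. unfold step at 1. rewrite expect_bind.
  apply (sw_finish n N B d K g x xt Hn HN HB HK). intros p Is Hin Hp.
  cbv beta zeta iota.
  destruct (us_facts Is p Hin Hp) as (Lus & Ldis & Hdis).
  set (us := map (uvec B g x xt) Is) in *. set (dis := map (scale b lam d) us) in *.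
  set (dt := fold_right Rmax 0 dis). set (ds := map (fun _ => dt) us).
  assert (Hd : forall dl, In dl ds -> 0 <= dl).
  { intros dl Hdl. unfold ds in Hdl. apply in_map_iff in Hdl as [? [<- _]]. apply fold_Rmax_nonneg. }
  assert (Lds : length ds = N) by (unfold ds; rewrite length_map; auto).
  destruct (Qlist_basic b d ds us Hd) as [M NN].
  assert (Hc : forall dl u, In (dl, u) (combine ds us) -> INR (count_out dl b u d) <= dlam).
  { set (cont := dbind (Qlist b d ds us)
                   (fun qs => dret (mkStepOut us ds (vadd (avg N qs) (gradf n g xt))))).
    assert (mass cont = 1) by (unfold cont; rewrite mass_bind; auto; intros; apply mass_ret).
    assert (nonneg cont) by (apply nonneg_bind; auto; intros; apply nonneg_ret).
    destruct (exists_pos cont) as (r2 & o & Hr2 & Hr2p); auto.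
    assert (Ho : so_ds o = ds /\ so_us o = us).
    { apply In_bind_elim in Hr2 as (q & qs & r & _ & [E|[]] & _). inversion E; subst; auto. }
    destruct Ho as [Ho1 Ho2].
    apply (count_extract n N B b d dlam Hn HN HB Hb ds us o); auto.
    apply (AS (p * r2)); [|apply Rmult_lt_0_compat; auto].
    unfold step. eapply In_bind_intro; [exact Hin|exact Hr2]. }
  destruct (pgood_B n N B b d lam dlam K g x xt Hn HN HB Hb Hl HK Is p Hin Hp Hc) as [_ PG].
  rewrite expect_bind_ret. cbn [so_v].
  apply (quant_ab b d N lam dlam K Hb Hl HN HK0 (gradf n g xt) (gradf n g x) ds us); auto.
Qed.

Lemma step_C : (forall r o, In (r, o) (step SchC n N B b d lam g x xt) -> 0 < r -> Pstep N b d dlam o) ->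
  expect (step SchC n N B b d lam g x xt) (fun o => sqnorm d (vsub (so_v o) (gradf n g x)))
  <= 2 * (INR d * (3 * Dl b lam K ^ 2 / 8) + dlam * (1 - lam) ^ 2 * K) + 2 * / (INR N * INR B) * K.
Proof.
  intros AS. unfold step at 1. rewrite expect_bind.
  apply (sw_finish n N B d K g x xt Hn HN HB HK). intros p Is Hin Hp.
  cbv beta zeta iota.
  destruct (us_facts Is p Hin Hp) as (Lus & Ldis & Hdis).
  set (us := map (uvec B g x xt) Is) in *. set (dis := map (scale b lam d) us) in *.
  set (dt := fold_right Rmax 0 dis). set (ds := map (fun _ => dt) us).
  assert (Hdt0 : 0 <= dt) by apply fold_Rmax_nonneg.
  assert (Hd : forall dl, In dl ds -> 0 <= dl).
  { intros dl Hdl. unfold ds in Hdl. apply in_map_iff in Hdl as [? [<- _]]. auto. }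
  assert (Lds : length ds = N) by (unfold ds; rewrite length_map; auto).
  destruct (Qlist_basic b d ds us Hd) as [M NN].
  assert (Hc : forall dl u, In (dl, u) (combine ds us) -> INR (count_out dl b u d) <= dlam).
  { set (cont := dbind (Qlist b d ds us) (fun qs => dbind (Qvec dt b d (avg N qs))
                   (fun w => dret (mkStepOut us ds (vadd w (gradf n g xt)))))).
    assert (mass cont = 1).
    { unfold cont; rewrite mass_bind; auto; intros.
      rewrite mass_bind; [apply (Qvec_basic dt b (avg N a) d Hdt0)|]. intros; apply mass_ret. }
    assert (nonneg cont).
    { apply nonneg_bind; auto; intros. apply nonneg_bind; [apply (Qvec_basic dt b (avg N a) d Hdt0)|].
      intros; apply nonneg_ret. }
    destruct (exists_pos cont) as (r2 & o & Hr2 & Hr2p); auto.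
    assert (Ho : so_ds o = ds /\ so_us o = us).
    { apply In_bind_elim in Hr2 as (q & qs & r & _ & Hr & _).
      apply In_bind_elim in Hr as (q' & w & r' & _ & [E|[]] & _). inversion E; subst; auto. }
    destruct Ho as [Ho1 Ho2].
    apply (count_extract n N B b d dlam Hn HN HB Hb ds us o); auto.
    apply (AS (p * r2)); [|apply Rmult_lt_0_compat; auto].
    unfold step. eapply In_bind_intro; [exact Hin|exact Hr2]. }
  destruct (pgood_B n N B b d lam dlam K g x xt Hn HN HB Hb Hl HK Is p Hin Hp Hc) as [Hdt PG].
  rewrite expect_bind.
  rewrite (expect_ext_in _ _ (fun qs => expect (Qvec dt b d (avg N qs))
            (fun w => sqnorm d (vsub (vadd w (gradf n g xt)) (gradf n g x))))).
  2:{ intros. rewrite expect_bind_ret. reflexivity. }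
  apply (quant_c b d N lam dlam K Hb Hl HN HK0 (gradf n g xt) (gradf n g x) us dt); auto.
Qed.
End Step3.

Lemma scale_nonneg b lam d u : (2 <= b)%nat -> 0 < lam -> 0 <= scale b lam d u.
Proof. intros Hb Hl. pose proof (cc_ge1 b 1 Hb ltac:(lia)). pose proof (infnorm_nonneg d u).
  unfold scale. fold (cc b). unfold Rdiv. apply Rmult_le_pos; [nra|].
  left; apply Rinv_0_lt_compat; lra. Qed.

Lemma step_nonneg sc n N B b d lam g x xt : (0 < n)%nat -> (2 <= b)%nat -> 0 < lam ->
  nonneg (step sc n N B b d lam g x xt).
Proof.
  intros Hn Hb Hl. unfold step. apply nonneg_bind; [apply (sw_basic n N B Hn)|].
  intros p Is _. cbv zeta.
  set (us := map (uvec B g x xt) Is). set (dis := map (scale b lam d) us).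
  set (dt := fold_right Rmax 0 dis).
  assert (Hdt : 0 <= dt) by apply fold_Rmax_nonneg.
  assert (H1 : forall dl, In dl dis -> 0 <= dl).
  { intros dl Hdl. apply in_map_iff in Hdl as [u [<- _]]. apply scale_nonneg; auto. }
  assert (H2 : forall dl, In dl (map (fun _ : vec => dt) us) -> 0 <= dl).
  { intros dl Hdl. apply in_map_iff in Hdl as [u [<- _]]. auto. }
  destruct sc.
  - apply nonneg_bind; [apply (Qlist_basic b d dis us H1)|]. intros; apply nonneg_ret.
  - apply nonneg_bind; [apply (Qlist_basic b d _ us H2)|]. intros; apply nonneg_ret.
  - apply nonneg_bind; [apply (Qlist_basic b d _ us H2)|]. intros.
    apply nonneg_bind; [apply (Qvec_basic dt b _ d Hdt)|]. intros; apply nonneg_ret.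
Qed.

Lemma inner_nonneg sc n N B b d lam eta g prox k x xt : (0 < n)%nat -> (2 <= b)%nat -> 0 < lam ->
  nonneg (inner_loop sc n N B b d lam eta g prox k x xt).
Proof.
  intros Hn Hb Hl. induction k; simpl; [apply nonneg_ret|].
  apply nonneg_bind; auto. intros. apply nonneg_bind; [apply step_nonneg; auto|].
  intros; apply nonneg_ret.
Qed.

Lemma snap_nonneg sc n N B b d m lam eta g prox s x0 : (0 < n)%nat -> (2 <= b)%nat -> 0 < lam ->
  nonneg (snapshots sc n N B b d m lam eta g prox s x0).
Proof.
  intros Hn Hb Hl. induction s; simpl; [apply nonneg_ret|].
  apply nonneg_bind; auto. intros. apply inner_nonneg; auto.
Qed.

Lemma hist_nonneg sc n N B b d m lam eta g prox s t x0 : (0 < n)%nat -> (2 <= b)%nat -> 0 < lam ->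
  nonneg (history sc n N B b d m lam eta g prox s t x0).
Proof.
  intros Hn Hb Hl. unfold history. apply nonneg_bind; [apply snap_nonneg; auto|].
  intros. apply nonneg_bind; [apply inner_nonneg; auto|]. intros; apply nonneg_ret.
Qed.

Lemma sqnorm_nonneg d v : 0 <= sqnorm d v.
Proof. unfold sqnorm. apply sumR_nonneg. intros; apply pow2_ge_0. Qed.

Lemma lip_sq d L (a c : vec) : norm d a <= L * norm d c -> sqnorm d a <= L ^ 2 * sqnorm d c.
Proof.
  unfold norm. intros H. pose proof (sqnorm_nonneg d a). pose proof (sqnorm_nonneg d c).
  pose proof (sqrt_pos (sqnorm d a)). pose proof (sqrt_pos (sqnorm d c)).
  rewrite <- (pow2_sqrt (sqnorm d a)), <- (pow2_sqrt (sqnorm d c)) by auto. nra.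
Qed.

Lemma lift sc n N B b d m lam eta g prox s t x0 (P : vec * vec * StepOut -> Prop) (C : R) :
  (0 < n)%nat -> (2 <= b)%nat -> 0 < lam ->
  almost_surely (joint sc n N B b d m lam eta g prox s t x0) P ->
  (forall x xt, (forall r o, In (r, o) (step sc n N B b d lam g x xt) -> 0 < r -> P (x, xt, o)) ->
     expect (step sc n N B b d lam g x xt) (fun o => sqnorm d (vsub (so_v o) (gradf n g x)))
     <= C * sqnorm d (vsub x xt)) ->
  expect (joint sc n N B b d m lam eta g prox s t x0)
    (fun w => sqnorm d (vsub (so_v (snd w)) (gradf n g (fst (fst w)))))
  <= C * expect (history sc n N B b d m lam eta g prox s t x0) (fun p => sqnorm d (vsub (fst p) (snd p))).
Proof.
  intros Hn Hb Hl AS Hstep. unfold joint. rewrite expect_bind.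
  rewrite (expect_ext_in _ _ (fun p => expect (step sc n N B b d lam g (fst p) (snd p))
       (fun o => sqnorm d (vsub (so_v o) (gradf n g (fst p)))))).
  2:{ intros. rewrite expect_bind_ret. reflexivity. }
  rewrite <- expect_scal. apply expect_le_pos; [apply hist_nonneg; auto|].
  intros q [x xt] Hin Hq. simpl. apply Hstep. intros r o Ho Hr.
  apply (AS (q * (r * 1))).
  - apply (In_bind_intro _ _ q (x, xt) (r * 1) _ Hin). simpl.
    apply (In_bind_intro _ _ r o 1 _ Ho). left; reflexivity.
  - apply Rmult_lt_0_compat; lra.
Qed.

Theorem lemma2 (n d N B S m b : nat) (L eta lam dlam : R)
  (f : nat -> vec -> R) (g : nat -> vec -> vec) (h : vec -> option R)
  (prox : vec -> vec) (x0 : vec) (sc : scheme) (s t : nat) :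
  (0 < n)%nat -> (0 < N)%nat -> (0 < B)%nat -> (2 <= b)%nat ->
  0 < eta -> 0 < lam <= 1 -> (s < S)%nat -> (t < m)%nat ->
  (forall i, (i < n)%nat -> has_gradient d (f i) (g i)) ->
  (forall i, (i < n)%nat -> forall x y, norm d (vsub (g i x) (g i y)) <= L * norm d (vsub x y)) ->
  proper h -> convex_ext h -> lsc d h -> is_prox d eta h prox ->
  0 <= dlam ->
  almost_surely (joint sc n N B b d m lam eta g prox s t x0)
    (fun w => forall i, (i < N)%nat ->
       INR (count_out (nth i (so_ds (snd w)) 0) b (nth i (so_us (snd w)) vzero) d) <= dlam) ->
  ((sc = SchA \/ sc = SchB) ->
     expect (joint sc n N B b d m lam eta g prox s t x0)
       (fun w => sqnorm d (vsub (so_v (snd w)) (gradf n g (fst (fst w)))))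
     <= 2 * L ^ 2 * (INR d * lam ^ 2 / (4 * (2 ^ (b - 1)%nat - 1) ^ 2)
                     + dlam * (1 - lam) ^ 2 + / (INR N * INR B))
        * expect (history sc n N B b d m lam eta g prox s t x0)
            (fun p => sqnorm d (vsub (fst p) (snd p)))) /\
  (sc = SchC ->
     expect (joint sc n N B b d m lam eta g prox s t x0)
       (fun w => sqnorm d (vsub (so_v (snd w)) (gradf n g (fst (fst w)))))
     <= 2 * L ^ 2 * (3 * INR d * lam ^ 2 / (8 * (2 ^ (b - 1)%nat - 1) ^ 2)
                     + dlam * (1 - lam) ^ 2 + / (INR N * INR B))
        * expect (history sc n N B b d m lam eta g prox s t x0)
            (fun p => sqnorm d (vsub (fst p) (snd p)))).
Proof.
  intros Hn HN HB Hb Heta Hl HsS Htm Hgrad Hlip Hpr Hcv Hlsc Hprox Hdlam AS.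
  pose proof (cc_ge1 b N Hb HN) as Hcc. unfold cc in Hcc.
  assert (HKa : forall x xt a, (a < n)%nat ->
            sqnorm d (vsub (g a x) (g a xt)) <= L ^ 2 * sqnorm d (vsub x xt))
    by (intros; apply lip_sq, Hlip; auto).
  split; intros Hsc.
  - apply (lift sc n N B b d m lam eta g prox s t x0 _ _ Hn Hb (proj1 Hl) AS).
    intros x xt ASx.
    assert (HK0 : 0 <= L ^ 2 * sqnorm d (vsub x xt))
      by (apply Rmult_le_pos; [apply pow2_ge_0|apply sqnorm_nonneg]).
    destruct Hsc as [-> | ->].
    + eapply Rle_trans.
      * apply (step_A n N B b d lam dlam _ g x xt Hn HN HB Hb Hl HK0 (HKa x xt) ASx).
      * rewrite (Dl_sq b N lam _ Hb HN HK0). unfold cc. right. field. split; [apply not_0_INR; lia|]. split; [apply not_0_INR; lia|lra].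
    + eapply Rle_trans.
      * apply (step_B n N B b d lam dlam _ g x xt Hn HN HB Hb Hl HK0 (HKa x xt) ASx).
      * rewrite (Dl_sq b N lam _ Hb HN HK0). unfold cc. right. field.
        split; [apply not_0_INR; lia|]. split; [apply not_0_INR; lia|lra].
  - subst sc. apply (lift SchC n N B b d m lam eta g prox s t x0 _ _ Hn Hb (proj1 Hl) AS).
    intros x xt ASx.
    assert (HK0 : 0 <= L ^ 2 * sqnorm d (vsub x xt))
      by (apply Rmult_le_pos; [apply pow2_ge_0|apply sqnorm_nonneg]).
    eapply Rle_trans.
    + apply (step_C n N B b d lam dlam _ g x xt Hn HN HB Hb Hl HK0 (HKa x xt) ASx).
    + rewrite (Dl_sq b N lam _ Hb HN HK0). unfold cc. right. field.
      split; [apply not_0_INR; lia|]. split; [apply not_0_INR; lia|lra].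
Qed.
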